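(* Let $\sigma_0,\sigma_\epsilon>0$, $\theta_0\in\mathbb{R}$, prior $\Theta\sim\mathrm{Laplace}(\theta_0,\sigma_0)$, signal $X=\Theta+\epsilon$ with $\epsilon\sim\mathrm{Cauchy}(0,\sigma_\epsilon)$ independent of $\Theta$, and let $\theta_1(x)=\mathbb{E}[\Theta\mid X=x]$. With $a=\sigma_\epsilon/\sigma_0$, the DeGroot coefficient $\omega=\frac{d\theta_1}{dx}\big|_{x=\theta_0}$ is $$\omega=1-a\cdot\frac{\frac{\pi}{2}\sin a-\cos a\,\mathrm{Ci}(a)-\sin a\,\mathrm{Si}(a)}{\frac{\pi}{2}\cos a-\cos a\,\mathrm{Si}(a)+\sin a\,\mathrm{Ci}(a)},$$ where $\mathrm{Si}(a)=\int_0^a\frac{\sin t}{t}dt$, $\mathrm{Ci}(a)=\gamma+\log a+\int_0^a\frac{\cos t-1}{t}dt$, and $\gamma$ is Euler's constant.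
   Context: $\mathrm{Laplace}(\mu,s)$ has density $t\mapsto\frac{1}{2s}e^{-|t-\mu|/s}$; $\mathrm{Cauchy}(\mu,s)$ has density $t\mapsto\frac{1}{\pi s[1+((t-\mu)/s)^2]}$. The posterior mean is $\theta_1(x)=\frac{\int\theta f_\Theta(\theta)l_\epsilon(x-\theta)d\theta}{\int f_\Theta(\theta)l_\epsilon(x-\theta)d\theta}$. *)

(* Defs.v *)
From Stdlib Require Import Reals.
From Coquelicot Require Import Coquelicot.
Open Scope R_scope.

Definition laplace_pdf (mu s t : R) : R := / (2 * s) * exp (- Rabs (t - mu) / s).

Definition cauchy_pdf (mu s t : R) : R := / (PI * s * (1 + ((t - mu) / s) ^ 2)).

Definition int_R (f : R -> R) : R :=
  RInt_gen f (Rbar_locally m_infty) (Rbar_locally p_infty).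

Definition posterior_mean (fTheta leps : R -> R) (x : R) : R :=
  int_R (fun th => th * fTheta th * leps (x - th)) /
  int_R (fun th => fTheta th * leps (x - th)).

Definition harmonic (n : nat) : R := sum_f_R0 (fun k => / INR (S k)) (pred n).
Definition euler_gamma : R :=
  real (Lim_seq (fun n => harmonic (S n) - ln (INR (S n)))).

(* Integrands, extended continuously at 0. *)
Definition sinc (t : R) : R := if Req_EM_T t 0 then 1 else sin t / t.
Definition cosm1_div (t : R) : R := if Req_EM_T t 0 then 0 else (cos t - 1) / t.

Definition SinInt (a : R) : R := RInt sinc 0 a.
Definition CosInt (a : R) : R := euler_gamma + ln a + RInt cosm1_div 0 a.

(* Main.v *)
Require Import Defs.
From Stdlib Require Import Reals Lra Lia Psatz.
From Coquelicot Require Import Coquelicot.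
Open Scope R_scope.

Lemma lim_pinf_eps (f : R -> R) (L : R) :
  is_lim f p_infty L <-> forall eps : posreal, exists M, forall x, M < x -> Rabs (f x - L) < eps.
Proof.
  rewrite <- is_lim_spec. simpl. tauto.
Qed.

Definition HI (c : R) (f : R -> R) (L : R) : Prop :=
  (forall b, c <= b -> ex_RInt f c b) /\ is_lim (fun b => RInt f c b) p_infty L.

Lemma HI_unique c f L1 L2 : HI c f L1 -> HI c f L2 -> L1 = L2.
Proof.
  intros [_ H1] [_ H2].
  assert (E := is_lim_unique _ _ _ H1). rewrite (is_lim_unique _ _ _ H2) in E.
  injection E; auto.
Qed.

Lemma HI_ext c f g L : (forall x, c <= x -> f x = g x) -> HI c f L -> HI c g L.
Proof.
  intros Hfg [H1 H2]. split.
  - intros b Hb. apply ex_RInt_ext with f. 2: now apply H1.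
    intros x Hx. apply Hfg. rewrite Rmin_left in Hx; lra.
  - apply is_lim_ext_loc with (fun b => RInt f c b). 2: exact H2.
    exists c. intros b Hb. apply RInt_ext. intros x Hx. apply Hfg.
    rewrite Rmin_left in Hx; lra.
Qed.

Lemma HI_plus c f g Lf Lg : HI c f Lf -> HI c g Lg -> HI c (fun x => f x + g x) (Lf + Lg).
Proof.
  intros [F1 F2] [G1 G2]. split.
  - intros b Hb. apply (ex_RInt_plus f g); auto.
  - apply is_lim_ext_loc with (fun b => RInt f c b + RInt g c b).
    + exists c. intros b Hb. symmetry. apply (RInt_plus f g); [apply F1|apply G1]; lra.
    + apply (is_lim_plus' _ _ p_infty Lf Lg); auto.
Qed.

Lemma HI_scal c f k L : HI c f L -> HI c (fun x => k * f x) (k * L).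
Proof.
  intros [F1 F2]. split.
  - intros b Hb. apply (ex_RInt_scal f); auto.
  - apply is_lim_ext_loc with (fun b => k * RInt f c b).
    + exists c. intros b Hb. symmetry. apply (RInt_scal f). apply F1; lra.
    + apply (is_lim_scal_l _ k p_infty L); auto.
Qed.

Lemma HI_opp c f L : HI c f L -> HI c (fun x => - f x) (- L).
Proof.
  intros H. apply HI_ext with (fun x => -1 * f x). intros; ring.
  replace (-L) with (-1 * L) by ring. now apply HI_scal.
Qed.

Lemma HI_minus c f g Lf Lg : HI c f Lf -> HI c g Lg -> HI c (fun x => f x - g x) (Lf - Lg).
Proof.
  intros H1 H2. apply HI_plus; auto. now apply HI_opp.
Qed.

Lemma HI_le c f g Lf Lg : (forall x, c <= x -> f x <= g x) -> HI c f Lf -> HI c g Lg -> Lf <= Lg.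
Proof.
  intros Hle [F1 F2] [G1 G2].
  assert (H := is_lim_le_loc (fun b => RInt f c b) (fun b => RInt g c b) p_infty Lf Lg). simpl in H. apply H; auto.
  exists c. intros b Hb. apply RInt_le; try (apply F1 || apply G1); try lra.
  intros; apply Hle; lra.
Qed.

Lemma HI_abs_le c f g Lf Lg : (forall x, c <= x -> Rabs (f x) <= g x) -> HI c f Lf -> HI c g Lg ->
  Rabs Lf <= Lg.
Proof.
  intros Hle Hf Hg. apply Rabs_le. split.
  - assert (Hg' := HI_opp _ _ _ Hg).
    apply (HI_le c (fun x => - g x) f); auto. intros x Hx. specialize (Hle x Hx).
    apply Rabs_le_between in Hle. lra.
  - apply (HI_le c f g); auto. intros x Hx. specialize (Hle x Hx).
    apply Rabs_le_between in Hle. lra.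
Qed.

Lemma HI_cst_le c f L B : (forall b, c <= b -> RInt f c b <= B) -> HI c f L -> L <= B.
Proof.
  intros Hb [_ H2].
  assert (H := is_lim_le_loc (fun b => RInt f c b) (fun _ => B) p_infty L B). simpl in H. apply H; auto.
  - exists c. intros; apply Hb; lra.
  - apply is_lim_const.
Qed.

Lemma HI_cst_ge c f L B : (forall b, c <= b -> B <= RInt f c b) -> HI c f L -> B <= L.
Proof.
  intros Hb [_ H2].
  assert (H := is_lim_le_loc (fun _ => B) (fun b => RInt f c b) p_infty B L). simpl in H. apply H; auto.
  - exists c. intros; apply Hb; lra.
  - apply is_lim_const.
Qed.

Lemma exR_sub (f : R -> R) c u v : (forall b, c <= b -> ex_RInt f c b) -> c <= u <= v -> ex_RInt f u v.
Proof.
  intros H Hu. apply (ex_RInt_Chasles_2 f c u v). lra. apply H; lra.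
Qed.

Lemma HI_RInt_le c f L b : (forall x, c <= x -> 0 <= f x) -> HI c f L -> c <= b -> RInt f c b <= L.
Proof.
  intros Hp Hf Hb. destruct Hf as [F1 F2].
  assert (H := is_lim_le_loc (fun _ => RInt f c b) (fun y => RInt f c y) p_infty (RInt f c b) L).
  simpl in H. apply H; auto.
  - exists b. intros y Hy.
    rewrite <- (RInt_Chasles f c b y); [| apply F1; lra | ].
    2:{ apply (exR_sub f c); auto; lra. }
    assert (0 <= RInt f b y).
    { apply RInt_ge_0. lra. apply (exR_sub f c); auto; lra.
      intros; apply Hp; lra. }
    unfold plus; simpl. lra.
  - apply is_lim_const.
Qed.

Lemma HI_FTC (c : R) (f F : R -> R) (L : R) : (forall x, c <= x -> is_derive F x (f x)) -> (forall x, c <= x -> continuous f x) ->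
  is_lim F p_infty L -> HI c f (L - F c).
Proof.
  intros HD HC HL.
  assert (Hi : forall b, c <= b -> is_RInt f c b (F b - F c)).
  { intros b Hb. apply (is_RInt_derive F f).
    - intros x Hx. rewrite Rmin_left in Hx by lra. apply HD; lra.
    - intros x Hx. rewrite Rmin_left in Hx by lra. apply HC; lra. }
  split.
  - intros b Hb. eexists; apply Hi; auto.
  - apply is_lim_ext_loc with (fun b => F b - F c).
    + exists c. intros b Hb. symmetry. apply is_RInt_unique. apply Hi; lra.
    + apply (is_lim_minus' F (fun _ => F c) p_infty L (F c)); auto. apply is_lim_const.
Qed.

Lemma HI_comp (c : R) (f g : R -> R) (Lg : R) : (forall x, c <= x -> continuous f x) ->
  (forall x, c <= x -> Rabs (f x) <= g x) -> HI c g Lg -> exists L, HI c f L.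
Proof.
  intros Hc Hle [G1 G2].
  assert (Hf : forall b, c <= b -> ex_RInt f c b).
  { intros b Hb. apply (ex_RInt_continuous (V:=R_CompleteNormedModule)). intros z Hz.
    rewrite Rmin_left, Rmax_right in Hz by lra. apply Hc; lra. }
  assert (Hex : exists y, filterlim (fun b => RInt f c b) (Rbar_locally p_infty) (locally y)).
  { apply (filterlim_locally_cauchy (F := Rbar_locally p_infty)).
    intros eps. assert (G2x := proj1 (lim_pinf_eps (fun b => RInt g c b) Lg) G2).
    assert (h2 : 0 < eps / 2) by (destruct eps; simpl; lra).
    destruct (G2x (mkposreal _ h2)) as [M HM]. simpl in HM.
    exists (fun x => Rmax M c < x). split.
    - exists (Rmax M c). auto.
    - assert (Key : forall u v, Rmax M c < u -> u <= v -> Rabs (RInt f c v - RInt f c u) < eps).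
      { intros u v Hu Huv.
        assert (Hm1 := Rmax_l M c). assert (Hm2 := Rmax_r M c).
        rewrite <- (RInt_Chasles f c u v); [| apply Hf; lra |].
        2:{ apply (exR_sub f c); auto; lra. }
        unfold plus; simpl. match goal with |- Rabs ?e < _ => replace e with (RInt f u v) by (simpl; lra) end.
        assert (Hfuv : ex_RInt f u v). { apply (exR_sub f c); auto; lra. }
        assert (Hguv : ex_RInt g u v). { apply (exR_sub g c); auto; lra. }
        eapply Rle_lt_trans. apply abs_RInt_le; auto.
        eapply Rle_lt_trans. apply RInt_le with (g := g); auto.
        apply (ex_RInt_continuous (V:=R_CompleteNormedModule)). intros z Hz. rewrite Rmin_left, Rmax_right in Hz by lra.
        apply continuous_comp. apply Hc; lra. apply continuous_Rabs.
        intros x Hx; apply Hle; lra.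
        assert (E : RInt g u v = RInt g c v - RInt g c u).
        { rewrite <- (RInt_Chasles g c u v); auto. unfold plus; simpl; lra. apply G1; lra. }
        rewrite E. assert (HM1 := HM u ltac:(lra)). assert (HM2 := HM v ltac:(lra)).
        apply Rabs_def2 in HM1. apply Rabs_def2 in HM2. lra. }
      intros u v Hu Hv. change (Rabs (RInt f c v - RInt f c u) < eps).
      destruct (Rle_dec u v).
      + apply Key; auto.
      + rewrite Rabs_minus_sym. apply Key; auto; lra. }
  destruct Hex as [y Hy]. exists y. split; auto.
Qed.

Lemma HI_base_shift (c d : R) (f : R -> R) (L : R) : c <= d -> HI c f L -> HI d f (L - RInt f c d).
Proof.
  intros Hcd [F1 F2]. split.
  - intros b Hb. apply (exR_sub f c); auto; lra.
  - apply is_lim_ext_loc with (fun b => RInt f c b - RInt f c d).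
    + exists d. intros b Hb. rewrite <- (RInt_Chasles f c d b); [| apply F1; lra | apply (exR_sub f c); auto; lra].
      unfold plus; simpl. lra.
    + apply (is_lim_minus' _ (fun _ => RInt f c d) p_infty L); auto. apply is_lim_const.
Qed.

Lemma HI_base_unshift (c d : R) (f : R -> R) (L : R) : c <= d -> ex_RInt f c d -> HI d f L ->
  HI c f (RInt f c d + L).
Proof.
  intros Hcd Hex [F1 F2]. split.
  - intros b Hb. destruct (Rle_dec b d).
    + apply (ex_RInt_Chasles_1 f c b d). lra. auto.
    + apply (ex_RInt_Chasles f c d b); auto. apply F1; lra.
  - apply is_lim_ext_loc with (fun b => RInt f c d + RInt f d b).
    + exists d. intros b Hb. rewrite <- (RInt_Chasles f c d b); auto. apply F1; lra.
    + apply (is_lim_plus' (fun _ => RInt f c d) _ p_infty); auto. apply is_lim_const.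
Qed.

Lemma HI_scale (c k : R) (g : R -> R) (L : R) : 0 < k -> HI c g L -> HI (c / k) (fun v => k * g (k * v)) L.
Proof.
  intros Hk [G1 G2].
  assert (E : forall b, c / k <= b -> RInt (fun v => k * g (k * v)) (c / k) b = RInt g c (k * b)).
  { intros b Hb. assert (H := RInt_comp_lin g k 0 (c / k) b).
    replace (k * (c / k) + 0) with c in H by (field; lra).
    replace (k * b + 0) with (k * b) in H by ring.
    rewrite <- H. apply RInt_ext. intros x _. unfold scal; simpl. unfold mult; simpl.
    f_equal. f_equal. ring.
    apply G1. apply Rmult_le_compat_l with (r := k) in Hb; [| lra].
    replace (k * (c / k)) with c in Hb by (field; lra). lra. }
  split.
  - intros b Hb. assert (H := ex_RInt_comp_lin g k 0 (c / k) b).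
    eapply ex_RInt_ext. 2: apply H.
    intros x _. unfold scal; simpl. unfold mult; simpl. f_equal. f_equal. ring.
    replace (k * (c / k) + 0) with c by (field; lra). replace (k * b + 0) with (k * b) by ring.
    apply G1. apply Rmult_le_compat_l with (r := k) in Hb; [| lra].
    replace (k * (c / k)) with c in Hb by (field; lra). lra.
  - apply lim_pinf_eps. intros eps.
    destruct (proj1 (lim_pinf_eps (fun b => RInt g c b) L) G2 eps) as [M HM].
    exists (Rmax (M / k) (c / k)). intros x Hx.
    assert (H1 := Rmax_l (M / k) (c / k)). assert (H2 := Rmax_r (M / k) (c / k)).
    rewrite E by lra. apply HM.
    apply Rmult_lt_compat_l with (r := k) in Hx; [| lra].
    assert (k * (M / k) = M) by (field; lra). 
    assert (k * (M/k) <= k * Rmax (M / k) (c / k)) by (apply Rmult_le_compat_l; lra). lra.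
Qed.

Lemma HI_pos (c d : R) (f : R -> R) (L : R) : c < d -> (forall x, c <= x -> 0 <= f x) ->
  (forall x, c < x < d -> 0 < f x) -> (forall x, c <= x <= d -> continuous f x) -> HI c f L -> 0 < L.
Proof.
  intros Hcd Hp Hs Hc Hf.
  assert (H1 := RInt_gt_0 f c d Hcd Hs Hc).
  assert (H2 := HI_RInt_le c f L d Hp Hf ltac:(lra)). lra.
Qed.

Lemma HI_diff_bound (c : R) (f g K : R -> R) (Lf Lg k : R) : HI c f Lf -> HI c g Lg -> HI c K k ->
  (forall v, c <= v -> Rabs (f v - g v) <= K v) -> Rabs (Lf - Lg) <= k.
Proof.
  intros Hf Hg HK Hb. apply (HI_abs_le c (fun v => f v - g v) K); auto.
  apply HI_minus; auto.
Qed.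

Lemma HI_deriv_param (c x0 delta J k : R) (F : R -> R -> R) (I dF K : R -> R) :
  0 < delta -> (forall x, Rabs (x - x0) < delta -> HI c (F x) (I x)) -> HI c dF J -> HI c K k ->
  (forall x v, Rabs (x - x0) < delta -> c <= v ->
     Rabs (F x v - F x0 v - (x - x0) * dF v) <= (x - x0) ^ 2 * K v) ->
  is_derive I x0 J.
Proof.
  intros Hd HF HdF HK Hb.
  assert (Bnd : forall h, Rabs h < delta -> Rabs (I (x0 + h) - I x0 - h * J) <= h ^ 2 * k).
  { intros h Hh.
    assert (Hx : Rabs (x0 + h - x0) < delta) by (replace (x0 + h - x0) with h by ring; auto).
    assert (Hx0 : Rabs (x0 - x0) < delta) by (replace (x0 - x0) with 0 by ring; rewrite Rabs_R0; lra).
    replace (I (x0 + h) - I x0 - h * J) with ((I (x0 + h) - I x0 - h * J) - 0) by ring.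
    apply (HI_diff_bound c (fun v => F (x0 + h) v - F x0 v - h * dF v) (fun _ => 0)
             (fun v => h ^ 2 * K v)).
    - apply HI_minus. apply HI_minus; auto. apply HI_scal; auto.
    - split. intros; apply ex_RInt_const.
      apply is_lim_ext with (fun _ => 0). intros; rewrite RInt_const; unfold scal; simpl; unfold mult; simpl; ring.
      apply is_lim_const.
    - apply HI_scal; auto.
    - intros v Hv. specialize (Hb (x0 + h) v Hx Hv).
      replace (x0 + h - x0) with h in Hb by ring. rewrite Rminus_0_r. auto. }
  apply is_derive_Reals. intros eps Heps.
  assert (Hk1 : 0 < Rabs k + 1) by (assert (0 <= Rabs k) by apply Rabs_pos; lra).
  assert (Hd2 : 0 < Rmin delta (eps / (Rabs k + 1))).
  { apply Rmin_pos; auto. apply Rdiv_lt_0_compat; lra. }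
  exists (mkposreal _ Hd2). intros h Hh0 Hh. simpl in Hh.
  assert (Hh1 : Rabs h < delta) by (eapply Rlt_le_trans; [apply Hh| apply Rmin_l]).
  assert (Hh2 : Rabs h < eps / (Rabs k + 1)) by (eapply Rlt_le_trans; [apply Hh| apply Rmin_r]).
  specialize (Bnd h Hh1).
  replace ((I (x0 + h) - I x0) / h - J) with ((I (x0 + h) - I x0 - h * J) / h) by (field; auto).
  unfold Rdiv. rewrite Rabs_mult, Rabs_Rinv by auto.
  assert (Hah : 0 < Rabs h) by (apply Rabs_pos_lt; auto).
  apply Rmult_lt_reg_r with (Rabs h); auto. rewrite Rmult_assoc, Rinv_l by lra. rewrite Rmult_1_r.
  eapply Rle_lt_trans. apply Bnd.
  assert (h ^ 2 = Rabs h * Rabs h).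
  { assert (0 <= h * h) by nra. rewrite <- Rabs_mult. rewrite Rabs_right by lra. ring. }
  rewrite H.
  assert (k <= Rabs k) by apply RRle_abs.
  assert (Rabs h * (Rabs k + 1) < eps).
  { apply Rmult_lt_reg_r with (/ (Rabs k + 1)). apply Rinv_0_lt_compat; lra.
    rewrite Rmult_assoc, Rinv_r by lra. rewrite Rmult_1_r. exact Hh2. }
  nra.
Qed.

Lemma taylor1 (g g' : R -> R) (x0 x M : R) :
  (forall t, Rmin x0 x <= t <= Rmax x0 x -> is_derive g t (g' t)) ->
  (forall t, Rmin x0 x <= t <= Rmax x0 x -> Rabs (g' t) <= M) ->
  Rabs (g x - g x0) <= M * Rabs (x - x0).
Proof.
  intros Hd Hb.
  destruct (MVT_gen g x0 x g') as [t [Ht Ht']].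
  - intros y Hy. apply Hd. lra.
  - intros y Hy. apply continuity_pt_filterlim. apply (ex_derive_continuous (K:=R_AbsRing) (V:=R_NormedModule)).
    eexists; apply Hd; auto.
  - rewrite Ht'. rewrite Rabs_mult. apply Rmult_le_compat_r. apply Rabs_pos. apply Hb; auto.
Qed.

Lemma taylor2 (g g' g'' : R -> R) (x0 x M : R) :
  (forall t, Rmin x0 x <= t <= Rmax x0 x -> is_derive g t (g' t)) ->
  (forall t, Rmin x0 x <= t <= Rmax x0 x -> is_derive g' t (g'' t)) ->
  (forall t, Rmin x0 x <= t <= Rmax x0 x -> Rabs (g'' t) <= M) ->
  Rabs (g x - g x0 - (x - x0) * g' x0) <= M * (x - x0) ^ 2.
Proof.
  intros Hd Hd' Hb.
  assert (HM : 0 <= M).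
  { eapply Rle_trans. apply Rabs_pos. apply (Hb x0). split. apply Rmin_l. apply Rmax_l. }
  assert (HD : forall y, Rmin x0 x <= y <= Rmax x0 x -> is_derive (fun t => g t - t * g' x0) y (g' y - g' x0)).
  { intros y Hy. apply (is_derive_minus g (fun t => t * g' x0)). apply Hd; lra.
    auto_derive; auto; ring. }
  destruct (MVT_gen (fun t => g t - t * g' x0) x0 x (fun t => g' t - g' x0)) as [t [Ht Ht']].
  - intros y Hy. apply HD; lra.
  - intros y Hy. apply continuity_pt_filterlim. apply (ex_derive_continuous (K:=R_AbsRing) (V:=R_NormedModule) (fun t => g t - t * g' x0)).
    eexists; apply HD; lra.
  - replace (g x - g x0 - (x - x0) * g' x0) with (g x - x * g' x0 - (g x0 - x0 * g' x0)) by ring.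
    rewrite Ht'. rewrite Rabs_mult.
    assert (H1 : Rabs (g' t - g' x0) <= M * Rabs (t - x0)).
    { apply taylor1 with g''.
      - intros y Hy. apply Hd'. split.
        + apply Rle_trans with (Rmin x0 t). apply Rmin_glb. apply Rmin_l. apply Ht. apply Hy.
        + apply Rle_trans with (Rmax x0 t). apply Hy. apply Rmax_lub. apply Rmax_l. apply Ht.
      - intros y Hy. apply Hb. split.
        + apply Rle_trans with (Rmin x0 t). apply Rmin_glb. apply Rmin_l. apply Ht. apply Hy.
        + apply Rle_trans with (Rmax x0 t). apply Hy. apply Rmax_lub. apply Rmax_l. apply Ht. }
    assert (H2 : Rabs (t - x0) <= Rabs (x - x0)).
    { destruct (Rle_dec x0 x).
      - rewrite Rmin_left in Ht by lra. rewrite Rmax_right in Ht by lra.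
        rewrite !Rabs_right by lra. lra.
      - rewrite Rmin_right in Ht by lra. rewrite Rmax_left in Ht by lra.
        rewrite !Rabs_left1 by lra. lra. }
    assert (E : (x - x0) ^ 2 = Rabs (x - x0) * Rabs (x - x0)).
    { assert (0 <= (x - x0) * (x - x0)) by apply Rle_0_sqr.
      rewrite <- Rabs_mult. rewrite Rabs_right by lra. ring. }
    rewrite E.
    assert (0 <= Rabs (x - x0)) by apply Rabs_pos.
    assert (0 <= Rabs (t - x0)) by apply Rabs_pos.
    apply Rle_trans with (M * Rabs (t - x0) * Rabs (x - x0)).
    apply Rmult_le_compat_r; auto.
    rewrite Rmult_assoc. apply Rmult_le_compat_l; auto. apply Rmult_le_compat_r; auto.
Qed.

Lemma int_R_split (f : R -> R) (c L1 L2 : R) : (forall x, continuous f x) ->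
  HI 0 (fun u => f (c + u)) L1 -> HI 0 (fun u => f (c - u)) L2 ->
  is_RInt_gen f (Rbar_locally m_infty) (Rbar_locally p_infty) (L1 + L2).
Proof.
  intros Hc [F1 F2] [G1 G2].
  assert (Hex : forall a b, ex_RInt f a b).
  { intros a b. apply (ex_RInt_continuous (V:=R_CompleteNormedModule)). intros; apply Hc. }
  replace (L1 + L2) with (plus L2 L1) by (unfold plus; simpl; ring).
  apply (is_RInt_gen_Chasles (Fa := Rbar_locally m_infty) (Fc := Rbar_locally p_infty) f c).
  - intros P [eps Heps].
    destruct (proj1 (lim_pinf_eps _ _) G2 eps) as [M HM].
    apply (Filter_prod _ _ _ (fun a => a < c - Rmax M 0) (fun b => b = c)).
    + exists (c - Rmax M 0). auto.
    + reflexivity.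
    + intros a b Ha Hb. simpl. subst b. exists (RInt f a c). split.
      * apply (RInt_correct (V:=R_CompleteNormedModule)). apply Hex.
      * apply Heps.
        assert (E : RInt f a c = RInt (fun u => f (c - u)) 0 (c - a)).
        { assert (H := RInt_comp_lin f (-1) c 0 (c - a)).
          replace (-1 * 0 + c) with c in H by ring. replace (-1 * (c - a) + c) with a in H by ring.
          rewrite <- opp_RInt_swap. 2: apply Hex. rewrite <- H. 2: apply Hex.
          assert (E2 : RInt (fun y => scal (-1) (f (-1 * y + c))) 0 (c - a) = opp (RInt (fun u => f (c - u)) 0 (c - a))).
          { rewrite <- RInt_opp. apply RInt_ext. intros x _. unfold scal, opp; simpl. unfold mult; simpl.
            replace (-1 * x + c) with (c - x) by ring. ring.
            apply (ex_RInt_continuous (V:=R_CompleteNormedModule)). intros z _.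
            apply (continuous_comp (fun u => c - u) f). apply (continuous_minus (fun _ => c) (fun u => u)).
            apply continuous_const. apply continuous_id. apply Hc. }
          transitivity (opp (opp (RInt (fun u => f (c - u)) 0 (c - a)) : R)). { f_equal. exact E2. } unfold opp; simpl. ring. }
        rewrite E. apply HM. assert (Hm := Rmax_l M 0). lra.
  - intros P [eps Heps].
    destruct (proj1 (lim_pinf_eps _ _) F2 eps) as [M HM].
    apply (Filter_prod _ _ _ (fun a => a = c) (fun b => c + Rmax M 0 < b)).
    + reflexivity.
    + exists (c + Rmax M 0). auto.
    + intros a b Ha Hb. simpl. subst a. exists (RInt f c b). split.
      * apply (RInt_correct (V:=R_CompleteNormedModule)). apply Hex.
      * apply Heps.
        assert (E : RInt f c b = RInt (fun u => f (c + u)) 0 (b - c)).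
        { assert (H := RInt_comp_lin f 1 c 0 (b - c)).
          replace (1 * 0 + c) with c in H by ring. replace (1 * (b - c) + c) with b in H by ring.
          rewrite <- H. 2: apply Hex. apply RInt_ext. intros x _. unfold scal; simpl. unfold mult; simpl.
          replace (1 * x + c) with (c + x) by ring. ring. }
        rewrite E. apply HM. assert (Hm := Rmax_l M 0). lra.
Qed.

Lemma int_R_value (f : R -> R) (c L1 L2 : R) : (forall x, continuous f x) ->
  HI 0 (fun u => f (c + u)) L1 -> HI 0 (fun u => f (c - u)) L2 ->
  RInt_gen f (Rbar_locally m_infty) (Rbar_locally p_infty) = L1 + L2.
Proof.
  intros Hc H1 H2. apply is_RInt_gen_unique. apply int_R_split with c; auto.
Qed.

Lemma lim_exp_neg (b : R) : 0 < b -> is_lim (fun v => exp (- b * v)) p_infty 0.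
Proof.
  intros Hb.
  apply (is_lim_comp (fun y => exp y) (fun v => - b * v) p_infty 0 m_infty).
  - apply is_lim_exp_m.
  - replace m_infty with (Rbar_mult p_infty (- b)).
    apply (is_lim_ext (fun v => v * (- b))). intros; ring.
    apply is_lim_scal_r. apply is_lim_id.
    simpl. destruct (Rle_dec 0 (-b)) as [Hc|Hc]; [exfalso; lra|]. reflexivity.
  - exists 0. intros; discriminate.
Qed.

Lemma lim_xexp_neg (b : R) : 0 < b -> is_lim (fun v => v * exp (- b * v)) p_infty 0.
Proof.
  intros Hb.
  apply (is_lim_ext (fun v => (- / b) * ((- b * v) * exp (- b * v)))).
  { intros; field; lra. }
  replace (Finite 0) with (Rbar_mult (- / b) 0) by (simpl; f_equal; ring).
  apply (is_lim_scal_l (fun v => (- b * v) * exp (- b * v)) (- / b) p_infty 0).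
  apply (is_lim_comp (fun y => y * exp y) (fun v => - b * v) p_infty 0 m_infty).
  - apply is_lim_mul_exp_m.
  - replace m_infty with (Rbar_mult p_infty (- b)).
    apply (is_lim_ext (fun v => v * (- b))). intros; ring.
    apply is_lim_scal_r. apply is_lim_id.
    simpl. destruct (Rle_dec 0 (-b)) as [Hc|Hc]; [exfalso; lra|]. reflexivity.
  - exists 0. intros; discriminate.
Qed.

Lemma lim_x2exp_neg (b : R) : 0 < b -> is_lim (fun v => v ^ 2 * exp (- b * v)) p_infty 0.
Proof.
  intros Hb.
  apply (is_lim_ext (fun v => (v * exp (- (b/2) * v)) * (v * exp (- (b/2) * v)))).
  { intros v. replace (- b * v) with (- (b/2) * v + - (b/2) * v) by field. rewrite exp_plus. ring. }
  replace (Finite 0) with (Rbar_mult 0 0) by (simpl; f_equal; ring).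
  apply is_lim_mult. apply lim_xexp_neg; lra. apply lim_xexp_neg; lra. simpl; auto.
Qed.

Lemma lim_poly_exp (b p0 p1 p2 : R) : 0 < b ->
  is_lim (fun v => (p2 * v ^ 2 + p1 * v + p0) * exp (- b * v)) p_infty 0.
Proof.
  intros Hb.
  apply (is_lim_ext (fun v => p2 * (v ^ 2 * exp (- b * v)) + (p1 * (v * exp (- b * v)) + p0 * exp (- b * v)))).
  { intros; ring. }
  replace (Finite 0) with (Finite (p2 * 0 + (p1 * 0 + p0 * 0))) by (f_equal; ring).
  apply is_lim_plus'. apply (is_lim_scal_l _ p2 p_infty 0). apply lim_x2exp_neg; auto.
  apply is_lim_plus'. apply (is_lim_scal_l _ p1 p_infty 0). apply lim_xexp_neg; auto.
  apply (is_lim_scal_l _ p0 p_infty 0). apply lim_exp_neg; auto.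
Qed.

Lemma cont_exp_lin (b : R) x : continuous (fun v => exp (- b * v)) x.
Proof.
  apply continuity_pt_filterlim. apply derivable_continuous_pt.
  apply derivable_pt_comp. apply derivable_pt_mult. apply derivable_pt_const. apply derivable_pt_id.
  apply derivable_pt_exp.
Qed.

Lemma HI_exp (b : R) : 0 < b -> HI 0 (fun v => exp (- b * v)) (/ b).
Proof.
  intros Hb.
  replace (/ b) with (0 - (- / b * exp (- b * 0))) by (replace (- b * 0) with 0 by ring; rewrite exp_0; field; lra).
  apply (HI_FTC 0 _ (fun v => - / b * exp (- b * v))).
  - intros x _. auto_derive; auto. field; lra.
  - intros x _. apply cont_exp_lin.
  - replace (Finite 0) with (Rbar_mult (- / b) 0) by (simpl; f_equal; ring).
    apply is_lim_scal_l. apply lim_exp_neg; auto.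
Qed.

Lemma HI_xexp (b : R) : 0 < b -> HI 0 (fun v => v * exp (- b * v)) (/ b ^ 2).
Proof.
  intros Hb.
  replace (/ b ^ 2) with (0 - ((0 * 0 ^ 2 + (- / b) * 0 + (- / b ^ 2)) * exp (- b * 0)))
    by (replace (- b * 0) with 0 by ring; rewrite exp_0; field; lra).
  apply (HI_FTC 0 _ (fun v => (0 * v ^ 2 + (- / b) * v + (- / b ^ 2)) * exp (- b * v))).
  - intros x _. auto_derive; auto. field; lra.
  - intros x _. apply (continuous_mult (fun v => v) (fun v => exp (- b * v))).
    apply continuous_id. apply cont_exp_lin.
  - apply lim_poly_exp; auto.
Qed.

Lemma HI_x2exp (b : R) : 0 < b -> HI 0 (fun v => v ^ 2 * exp (- b * v)) (2 / b ^ 3).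
Proof.
  intros Hb.
  replace (2 / b ^ 3) with (0 - (((- / b) * 0 ^ 2 + (- 2 / b ^ 2) * 0 + (- 2 / b ^ 3)) * exp (- b * 0)))
    by (replace (- b * 0) with 0 by ring; rewrite exp_0; field; lra).
  apply (HI_FTC 0 _ (fun v => ((- / b) * v ^ 2 + (- 2 / b ^ 2) * v + (- 2 / b ^ 3)) * exp (- b * v))).
  - intros x _. auto_derive; auto. field; lra.
  - intros x _. apply (continuous_mult (fun v => v ^ 2) (fun v => exp (- b * v))).
    apply (continuous_mult (fun v => v) (fun v => v ^ 1)). apply continuous_id.
    apply (continuous_mult (fun v => v) (fun v => 1)). apply continuous_id. apply continuous_const.
    apply cont_exp_lin.
  - apply lim_poly_exp; auto.
Qed.

Lemma lim_atan : is_lim atan p_infty (PI / 2).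
Proof.
  apply (is_lim_ext_loc (fun v => PI / 2 - atan (/ v))).
  { exists 0. intros v Hv. rewrite atan_inv by auto. ring. }
  replace (Finite (PI / 2)) with (Finite (PI / 2 - atan 0)) by (rewrite atan_0; f_equal; ring).
  apply (is_lim_minus' (fun _ => PI / 2) (fun v => atan (/ v)) p_infty (PI/2) (atan 0)).
  apply is_lim_const.
  apply (is_lim_comp_continuous (fun v => / v) atan p_infty 0).
  replace (Finite 0) with (Rbar_inv p_infty) by reflexivity.
  apply is_lim_inv. apply is_lim_id. discriminate.
  apply continuous_atan.
Qed.

Lemma cont_inv1sq x : continuous (fun v => / (1 + v ^ 2)) x.
Proof.
  apply continuity_pt_filterlim. apply derivable_continuous_pt.
  apply derivable_pt_inv. apply Rgt_not_eq. apply Rlt_gt. assert (0 <= x ^ 2) by (apply pow2_ge_0). lra.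
  apply derivable_pt_plus. apply derivable_pt_const. apply derivable_pt_pow.
Qed.

Lemma HI_atan : HI 0 (fun v => / (1 + v ^ 2)) (PI / 2).
Proof.
  replace (PI / 2) with (PI / 2 - atan 0) by (rewrite atan_0; ring).
  apply HI_FTC.
  - intros x _. assert (H := is_derive_atan x). unfold Rsqr in H. replace (x ^ 2) with (x * x) by ring. exact H.
  - intros x _. apply cont_inv1sq.
  - apply lim_atan.
Qed.

Lemma const_deriv0 (F : R -> R) : (forall a, 0 < a -> is_derive F a 0) ->
  forall a1 a2, 0 < a1 -> 0 < a2 -> F a1 = F a2.
Proof.
  intros HD.
  assert (K : forall a1 a2, 0 < a1 -> a1 < a2 -> F a1 = F a2).
  { intros a1 a2 H1 H2.
    destruct (MVT_gen F a1 a2 (fun _ => 0)) as [c [Hc Hc']].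
    - intros x Hx. rewrite Rmin_left, Rmax_right in Hx by lra. apply HD; lra.
    - intros x Hx. rewrite Rmin_left, Rmax_right in Hx by lra.
      apply continuity_pt_filterlim. apply (ex_derive_continuous (K:=R_AbsRing) (V:=R_NormedModule) F).
      exists 0. apply HD; lra.
    - lra. }
  intros a1 a2 H1 H2. destruct (Rtotal_order a1 a2) as [h|[h|h]].
  apply K; auto. subst; auto. symmetry; apply K; auto.
Qed.

Lemma small_zero (F : R -> R) (a1 : R) : 0 < a1 -> (forall a, 0 < a -> F a = F a1) ->
  (forall eps, 0 < eps -> exists delta, 0 < delta /\ forall a, 0 < a < delta -> Rabs (F a) <= eps) ->
  F a1 = 0.
Proof.
  intros Ha1 Hc Hs.
  destruct (Req_dec (F a1) 0) as [h|h]; auto. exfalso.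
  assert (Hp : 0 < Rabs (F a1) / 2) by (apply Rabs_pos_lt in h; lra).
  destruct (Hs _ Hp) as [dl [Hdl Hb]].
  specialize (Hb (dl / 2) ltac:(lra)). rewrite Hc in Hb by lra. lra.
Qed.

Lemma ode_zero (d e : R -> R) :
  (forall a, 0 < a -> is_derive d a (- e a)) -> (forall a, 0 < a -> is_derive e a (d a)) ->
  (forall eps, 0 < eps -> exists delta, 0 < delta /\ forall a, 0 < a < delta -> Rabs (d a) <= eps /\ Rabs (e a) <= eps) ->
  forall a, 0 < a -> d a = 0 /\ e a = 0.
Proof.
  intros Hd He Hs a Ha.
  set (Phi := fun t => d t * cos t + e t * sin t).
  set (Psi := fun t => d t * sin t - e t * cos t).
  assert (DPhi : forall t, 0 < t -> is_derive Phi t 0).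
  { intros t Ht. apply is_derive_Reals.
    assert (H1 := proj1 (is_derive_Reals _ _ _) (Hd t Ht)).
    assert (H2 := proj1 (is_derive_Reals _ _ _) (He t Ht)).
    assert (H := derivable_pt_lim_plus _ _ _ _ _ (derivable_pt_lim_mult _ _ _ _ _ H1 (derivable_pt_lim_cos t))
                                                (derivable_pt_lim_mult _ _ _ _ _ H2 (derivable_pt_lim_sin t))).
    replace 0 with (- e t * cos t + d t * - sin t + (d t * sin t + e t * cos t)) by ring.
    exact H. }
  assert (DPsi : forall t, 0 < t -> is_derive Psi t 0).
  { intros t Ht. apply is_derive_Reals.
    assert (H1 := proj1 (is_derive_Reals _ _ _) (Hd t Ht)).
    assert (H2 := proj1 (is_derive_Reals _ _ _) (He t Ht)).
    assert (H := derivable_pt_lim_minus _ _ _ _ _ (derivable_pt_lim_mult _ _ _ _ _ H1 (derivable_pt_lim_sin t))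
                                                (derivable_pt_lim_mult _ _ _ _ _ H2 (derivable_pt_lim_cos t))).
    replace 0 with (- e t * sin t + d t * cos t - (d t * cos t + e t * - sin t)) by ring.
    exact H. }
  assert (Sm : forall (F : R -> R), (forall t, Rabs (F t) <= Rabs (d t) + Rabs (e t)) ->
     forall eps, 0 < eps -> exists delta, 0 < delta /\ forall t, 0 < t < delta -> Rabs (F t) <= eps).
  { intros F HF eps Heps. destruct (Hs (eps / 2) ltac:(lra)) as [dl [Hdl Hb]].
    exists dl. split; auto. intros t Ht. specialize (Hb t Ht). specialize (HF t). lra. }
  assert (Z1 : Phi a = 0).
  { apply small_zero; auto. intros; apply const_deriv0; auto.
    apply Sm. intros t. unfold Phi. eapply Rle_trans. apply Rabs_triang.
    rewrite !Rabs_mult. assert (Rabs (cos t) <= 1) by (apply Rabs_le; apply COS_bound). 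
    assert (Rabs (sin t) <= 1) by (apply Rabs_le; apply SIN_bound).
    assert (0 <= Rabs (d t)) by apply Rabs_pos. assert (0 <= Rabs (e t)) by apply Rabs_pos. nra. }
  assert (Z2 : Psi a = 0).
  { apply small_zero; auto. intros; apply const_deriv0; auto.
    apply Sm. intros t. unfold Psi. unfold Rminus. eapply Rle_trans. apply Rabs_triang.
    rewrite Rabs_Ropp, !Rabs_mult. assert (Rabs (cos t) <= 1) by (apply Rabs_le; apply COS_bound). 
    assert (Rabs (sin t) <= 1) by (apply Rabs_le; apply SIN_bound).
    assert (0 <= Rabs (d t)) by apply Rabs_pos. assert (0 <= Rabs (e t)) by apply Rabs_pos. nra. }
  unfold Phi in Z1. unfold Psi in Z2.
  assert (Hcs := sin2_cos2 a). unfold Rsqr in Hcs.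
  split.
  - replace (d a) with ((d a * cos a + e a * sin a) * cos a + (d a * sin a - e a * cos a) * sin a).
    rewrite Z1, Z2; ring.
    replace (d a) with (d a * (sin a * sin a + cos a * cos a)) at 3 by (rewrite Hcs; ring). ring.
  - replace (e a) with ((d a * cos a + e a * sin a) * sin a - (d a * sin a - e a * cos a) * cos a).
    rewrite Z1, Z2; ring.
    replace (e a) with (e a * (sin a * sin a + cos a * cos a)) at 3 by (rewrite Hcs; ring). ring.
Qed.

Lemma cont_at0_lip (f : R -> R) : (forall t, Rabs (f t - f 0) <= Rabs t) -> continuous f 0.
Proof.
  intros H. apply continuity_pt_filterlim. intros eps Heps. exists eps. split; auto.
  intros x [_ Hx]. simpl in *. unfold R_dist in *. eapply Rle_lt_trans. apply H.
  replace (x - 0) with x in Hx by ring. auto.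
Qed.

Lemma abs_sin_le t : Rabs (sin t) <= Rabs t.
Proof.
  replace (sin t) with (sin t - sin 0) by (rewrite sin_0; ring).
  replace (Rabs t) with (1 * Rabs (t - 0)) by (rewrite Rminus_0_r; ring).
  apply taylor1 with cos. intros; apply is_derive_Reals, derivable_pt_lim_sin.
  intros; apply Rabs_le, COS_bound.
Qed.

Lemma sin_taylor t : Rabs (sin t - t) <= t ^ 2.
Proof.
  replace (sin t - t) with (sin t - sin 0 - (t - 0) * cos 0) by (rewrite sin_0, cos_0; ring).
  replace (t ^ 2) with (1 * (t - 0) ^ 2) by ring.
  apply taylor2 with (fun x => - sin x).
  - intros; apply is_derive_Reals, derivable_pt_lim_sin.
  - intros; apply is_derive_Reals, derivable_pt_lim_cos.
  - intros; rewrite Rabs_Ropp; apply Rabs_le, SIN_bound.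
Qed.

Lemma cos_taylor t : Rabs (cos t - 1) <= t ^ 2.
Proof.
  assert (H := taylor2 cos (fun x => - sin x) (fun x => - cos x) 0 t 1).
  cbv beta in H. rewrite sin_0, cos_0 in H. replace (cos t - 1) with (cos t - 1 - (t - 0) * - 0) by ring.
  replace (t ^ 2) with (1 * (t - 0) ^ 2) by ring. apply H.
  - intros; apply is_derive_Reals, derivable_pt_lim_cos.
  - intros. apply (is_derive_opp sin). apply is_derive_Reals, derivable_pt_lim_sin.
  - intros; rewrite Rabs_Ropp; apply Rabs_le, COS_bound.
Qed.

Lemma cont_div_id (g : R -> R) x : x <> 0 -> (forall y, derivable_pt g y) -> continuous (fun t => g t / t) x.
Proof.
  intros Hx Hg. apply continuity_pt_filterlim. apply derivable_continuous_pt.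
  apply derivable_pt_div. apply Hg. apply derivable_pt_id. auto.
Qed.

Lemma locally_neq0 x : x <> 0 -> locally x (fun y => y <> 0).
Proof.
  intros Hx. assert (Hp : 0 < Rabs x) by (apply Rabs_pos_lt; auto).
  exists (mkposreal _ Hp). intros y Hy. simpl in Hy. unfold ball in Hy; simpl in Hy; unfold AbsRing_ball, abs, minus, plus, opp in Hy; simpl in Hy.
  intros E; subst. replace (0 + - x) with (- x) in Hy by ring. rewrite Rabs_Ropp in Hy. lra.
Qed.

Lemma sinc_cont x : continuous sinc x.
Proof.
  destruct (Req_dec x 0) as [Hx|Hx].
  - subst. apply cont_at0_lip. intros t. unfold sinc. destruct (Req_EM_T 0 0); [|congruence].
    destruct (Req_EM_T t 0) as [Ht|Ht].
    + subst. rewrite Rminus_eq_0, Rabs_R0. lra.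
    + replace (sin t / t - 1) with ((sin t - t) / t) by (field; auto).
      unfold Rdiv. rewrite Rabs_mult, Rabs_Rinv by auto.
      assert (Hp : 0 < Rabs t) by (apply Rabs_pos_lt; auto).
      apply Rmult_le_reg_r with (Rabs t); auto. rewrite Rmult_assoc, Rinv_l by lra.
      eapply Rle_trans. rewrite Rmult_1_r. apply sin_taylor.
      rewrite <- Rabs_mult. rewrite Rabs_right. lra. apply Rle_ge. nra.
  - apply continuous_ext_loc with (fun t => sin t / t).
    + eapply filter_imp. 2: apply locally_neq0; eauto. intros y Hy. unfold sinc.
      destruct (Req_EM_T y 0); [congruence| auto].
    + apply cont_div_id; auto. apply derivable_pt_sin.
Qed.

Lemma cosm1_cont x : continuous cosm1_div x.
Proof.
  destruct (Req_dec x 0) as [Hx|Hx].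
  - subst. apply cont_at0_lip. intros t. unfold cosm1_div. destruct (Req_EM_T 0 0); [|congruence].
    destruct (Req_EM_T t 0) as [Ht|Ht].
    + subst. rewrite Rminus_eq_0, Rabs_R0. lra.
    + rewrite Rminus_0_r. unfold Rdiv. rewrite Rabs_mult, Rabs_Rinv by auto.
      assert (Hp : 0 < Rabs t) by (apply Rabs_pos_lt; auto).
      apply Rmult_le_reg_r with (Rabs t); auto. rewrite Rmult_assoc, Rinv_l by lra.
      eapply Rle_trans. rewrite Rmult_1_r. apply cos_taylor.
      rewrite <- Rabs_mult. rewrite Rabs_right. lra. apply Rle_ge. nra.
  - apply continuous_ext_loc with (fun t => (cos t - 1) / t).
    + eapply filter_imp. 2: apply locally_neq0; eauto. intros y Hy. unfold cosm1_div.
      destruct (Req_EM_T y 0); [congruence| auto].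
    + apply (cont_div_id (fun t => cos t - 1)); auto. intros y.
      apply derivable_pt_minus. apply derivable_pt_cos. apply derivable_pt_const.
Qed.

Lemma sinc_bound t : Rabs (sinc t) <= 1.
Proof.
  unfold sinc. destruct (Req_EM_T t 0). rewrite Rabs_R1; lra.
  unfold Rdiv. rewrite Rabs_mult, Rabs_Rinv by auto.
  assert (Hp : 0 < Rabs t) by (apply Rabs_pos_lt; auto).
  apply Rmult_le_reg_r with (Rabs t); auto. rewrite Rmult_assoc, Rinv_l by lra.
  rewrite Rmult_1_r, Rmult_1_l. apply abs_sin_le.
Qed.

Lemma cosm1_bound t : Rabs (cosm1_div t) <= Rabs t.
Proof.
  unfold cosm1_div. destruct (Req_EM_T t 0). rewrite Rabs_R0; apply Rabs_pos.
  unfold Rdiv. rewrite Rabs_mult, Rabs_Rinv by auto.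
  assert (Hp : 0 < Rabs t) by (apply Rabs_pos_lt; auto).
  apply Rmult_le_reg_r with (Rabs t); auto. rewrite Rmult_assoc, Rinv_l by lra.
  rewrite Rmult_1_r. eapply Rle_trans. apply cos_taylor.
  rewrite <- Rabs_mult. rewrite Rabs_right. lra. apply Rle_ge. nra.
Qed.

Lemma ex_RInt_cont_all (f : R -> R) a b : (forall x, continuous f x) -> ex_RInt f a b.
Proof.
  intros H. apply (ex_RInt_continuous (V:=R_CompleteNormedModule)). intros; apply H.
Qed.

Lemma RInt_abs_bound (f : R -> R) a M : 0 <= a -> (forall x, continuous f x) ->
  (forall t, 0 <= t <= a -> Rabs (f t) <= M) -> Rabs (RInt f 0 a) <= a * M.
Proof.
  intros Ha Hc Hb. replace a with (a - 0) at 2 by ring.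
  apply (norm_RInt_le_const (V:=R_NormedModule) f 0 a). auto. intros x Hx; apply Hb; lra.
  apply (RInt_correct (V:=R_CompleteNormedModule)). apply ex_RInt_cont_all; auto.
Qed.

Lemma Si_derive a : 0 < a -> is_derive SinInt a (sin a / a).
Proof.
  intros Ha. replace (sin a / a) with (sinc a).
  2:{ unfold sinc. destruct (Req_EM_T a 0); [lra|auto]. }
  apply (is_derive_RInt sinc SinInt 0 a).
  - apply filter_forall. intros b. unfold SinInt. apply (RInt_correct (V:=R_CompleteNormedModule)).
    apply ex_RInt_cont_all, sinc_cont.
  - apply sinc_cont.
Qed.

Lemma Ci_derive a : 0 < a -> is_derive CosInt a (cos a / a).
Proof.
  intros Ha. unfold CosInt.
  replace (cos a / a) with (0 + / a + cosm1_div a).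
  2:{ unfold cosm1_div. destruct (Req_EM_T a 0); [lra|]. field; lra. }
  assert (H1 : is_derive (fun x => RInt cosm1_div 0 x) a (cosm1_div a)).
  { apply (is_derive_RInt cosm1_div _ 0 a).
    - apply filter_forall. intros b. apply (RInt_correct (V:=R_CompleteNormedModule)).
      apply ex_RInt_cont_all, cosm1_cont.
    - apply cosm1_cont. }
  apply is_derive_Reals.
  assert (H := derivable_pt_lim_plus _ _ _ _ _ (derivable_pt_lim_plus _ _ _ _ _ (derivable_pt_lim_const euler_gamma a)
     (derivable_pt_lim_ln a Ha)) (proj1 (is_derive_Reals _ _ _) H1)).
  exact H.
Qed.

Definition Pf (a : R) : R := PI / 2 * cos a - cos a * SinInt a + sin a * CosInt a.
Definition Qf (a : R) : R := PI / 2 * sin a - cos a * CosInt a - sin a * SinInt a.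

Lemma Pf_derive a : 0 < a -> is_derive Pf a (- Qf a).
Proof.
  intros Ha. apply is_derive_Reals.
  assert (HS := proj1 (is_derive_Reals _ _ _) (Si_derive a Ha)).
  assert (HC := proj1 (is_derive_Reals _ _ _) (Ci_derive a Ha)).
  assert (H := derivable_pt_lim_plus _ _ _ _ _
     (derivable_pt_lim_minus _ _ _ _ _ (derivable_pt_lim_scal _ (PI/2) _ _ (derivable_pt_lim_cos a))
        (derivable_pt_lim_mult _ _ _ _ _ (derivable_pt_lim_cos a) HS))
     (derivable_pt_lim_mult _ _ _ _ _ (derivable_pt_lim_sin a) HC)).
  unfold Pf, Qf. match goal with |- derivable_pt_lim _ _ ?l => replace l with
    (PI / 2 * - sin a - (- sin a * SinInt a + cos a * (sin a / a)) + (cos a * CosInt a + sin a * (cos a / a))) end.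
  exact H. field. lra.
Qed.

Lemma Qf_derive a : 0 < a -> is_derive Qf a (Pf a - / a).
Proof.
  intros Ha. apply is_derive_Reals.
  assert (HS := proj1 (is_derive_Reals _ _ _) (Si_derive a Ha)).
  assert (HC := proj1 (is_derive_Reals _ _ _) (Ci_derive a Ha)).
  assert (H := derivable_pt_lim_minus _ _ _ _ _
     (derivable_pt_lim_minus _ _ _ _ _ (derivable_pt_lim_scal _ (PI/2) _ _ (derivable_pt_lim_sin a))
        (derivable_pt_lim_mult _ _ _ _ _ (derivable_pt_lim_cos a) HC))
     (derivable_pt_lim_mult _ _ _ _ _ (derivable_pt_lim_sin a) HS)).
  unfold Pf, Qf. match goal with |- derivable_pt_lim _ _ ?l => replace l with
    (PI / 2 * cos a - (- sin a * CosInt a + cos a * (cos a / a)) - (cos a * SinInt a + sin a * (sin a / a))) end.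
  exact H. assert (Hcs := sin2_cos2 a). unfold Rsqr in Hcs.
  assert (E : cos a * (cos a / a) + sin a * (sin a / a) = / a).
  { replace (cos a * (cos a / a) + sin a * (sin a / a)) with ((sin a * sin a + cos a * cos a) / a) by (field; lra).
    rewrite Hcs. field; lra. }
  unfold Pf. lra.
Qed.

Lemma exp_mono x y : x <= y -> exp x <= exp y.
Proof. intros [H|H]. left; apply exp_increasing; auto. subst; lra. Qed.

Lemma HI_Lim c f L : HI c f L -> real (Lim (fun b => RInt f c b) p_infty) = L.
Proof. intros [_ H]. rewrite (is_lim_unique _ _ _ H). reflexivity. Qed.

Lemma HI_exLim c f : (exists L, HI c f L) -> HI c f (real (Lim (fun b => RInt f c b) p_infty)).
Proof. intros [L H]. rewrite (HI_Lim c f L H). auto. Qed.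

Definition wg (v : R) : R := / (1 + v ^ 2).
Definition wh (v : R) : R := v / (1 + v ^ 2).
Definition wk (v : R) : R := 2 * v ^ 2 / (1 + v ^ 2) ^ 2.
Definition gI (a v : R) : R := wg v * exp (- a * v).
Definition hI (a v : R) : R := wh v * exp (- a * v).
Definition kI (a v : R) : R := wk v * exp (- a * v).

Lemma one_plus_sq_pos v : 0 < 1 + v ^ 2.
Proof. assert (0 <= v ^ 2) by apply pow2_ge_0. lra. Qed.

Lemma wg_bound v : 0 <= wg v <= 1.
Proof.
  unfold wg. assert (H := one_plus_sq_pos v). assert (0 <= v ^ 2) by apply pow2_ge_0. split.
  left; apply Rinv_0_lt_compat; auto.
  rewrite <- Rinv_1. apply Rinv_le_contravar; lra.
Qed.

Lemma wh_bound v : 0 <= v -> 0 <= wh v <= 1.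
Proof.
  intros Hv. unfold wh. assert (H := one_plus_sq_pos v). split.
  apply Rdiv_le_0_compat; lra.
  apply Rmult_le_reg_r with (1 + v ^ 2); auto. unfold Rdiv. rewrite Rmult_assoc, Rinv_l by lra. nra.
Qed.

Lemma wk_bound v : 0 <= wk v <= 2.
Proof.
  unfold wk. assert (H := one_plus_sq_pos v). assert (0 <= v ^ 2) by apply pow2_ge_0. split.
  apply Rdiv_le_0_compat; nra.
  apply Rmult_le_reg_r with ((1 + v ^ 2) ^ 2). nra. unfold Rdiv. rewrite Rmult_assoc, Rinv_l by nra. nra.
Qed.

Lemma cont_w_exp (w : R -> R) (a x : R) : (forall y, ex_derive w y) -> continuous (fun v => w v * exp (- a * v)) x.
Proof.
  intros Hw. apply (ex_derive_continuous (K:=R_AbsRing) (V:=R_NormedModule) (fun v => w v * exp (- a * v))).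
  apply (ex_derive_mult w (fun v => exp (- a * v))). apply Hw. auto_derive; auto.
Qed.

Lemma wg_der y : ex_derive wg y.
Proof. unfold wg. auto_derive. assert (H := one_plus_sq_pos y). lra. Qed.
Lemma wh_der y : ex_derive wh y.
Proof. unfold wh. auto_derive. assert (H := one_plus_sq_pos y). lra. Qed.
Lemma wk_der y : ex_derive wk y.
Proof. unfold wk. assert (H := one_plus_sq_pos y). auto_derive; repeat split; try lra; nra. Qed.

Lemma HI_w_exists (w : R -> R) (a B : R) : 0 < a -> (forall y, ex_derive w y) ->
  (forall v, 0 <= v -> 0 <= w v <= B) -> exists L, HI 0 (fun v => w v * exp (- a * v)) L.
Proof.
  intros Ha Hw Hb. apply HI_comp with (fun v => B * exp (- a * v)) (B * / a).
  - intros x _. apply cont_w_exp; auto.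
  - intros x Hx. specialize (Hb x Hx). rewrite Rabs_mult. rewrite (Rabs_right (exp _)) by (left; apply exp_pos).
    rewrite Rabs_right by lra. apply Rmult_le_compat_r. left; apply exp_pos. lra.
  - apply HI_scal. apply HI_exp; auto.
Qed.

Definition Gf (a : R) : R := real (Lim (fun b => RInt (gI a) 0 b) p_infty).
Definition Hf (a : R) : R := real (Lim (fun b => RInt (hI a) 0 b) p_infty).

Lemma HI_G a : 0 < a -> HI 0 (gI a) (Gf a).
Proof.
  intros Ha. apply HI_exLim. apply (HI_w_exists wg a 1); auto. apply wg_der. intros; apply wg_bound.
Qed.

Lemma HI_H a : 0 < a -> HI 0 (hI a) (Hf a).
Proof.
  intros Ha. apply HI_exLim. apply (HI_w_exists wh a 1); auto. apply wh_der. intros; apply wh_bound; auto.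
Qed.

Lemma Gf_pos a : 0 < a -> 0 < Gf a.
Proof.
  intros Ha. apply (HI_pos 0 1 (gI a)); [lra | | | | apply HI_G; auto].
  - intros x _. unfold gI. assert (H := wg_bound x). assert (0 < exp (- a * x)) by apply exp_pos. nra.
  - intros x _. unfold gI, wg. apply Rmult_lt_0_compat. apply Rinv_0_lt_compat, one_plus_sq_pos. apply exp_pos.
  - intros x _. apply cont_w_exp. apply wg_der.
Qed.

Lemma lim_inv1sq : is_lim (fun v => / (1 + v ^ 2)) p_infty 0.
Proof.
  apply lim_pinf_eps. intros eps. exists (/ eps + 1). intros x Hx.
  assert (He := cond_pos eps). assert (Hie : 0 < / eps) by (apply Rinv_0_lt_compat; auto).
  assert (H := one_plus_sq_pos x). rewrite Rminus_0_r. rewrite Rabs_right by (left; apply Rinv_0_lt_compat; auto).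
  assert (Hx2 : / eps < 1 + x ^ 2) by nra.
  apply Rinv_lt_contravar in Hx2. rewrite Rinv_inv in Hx2. auto. nra.
Qed.

Lemma HI_K a : 0 < a -> HI 0 (kI a) (Gf a - a * Hf a).
Proof.
  intros Ha.
  set (F := fun v => - (v * exp (- a * v)) * / (1 + v ^ 2)).
  assert (HF : HI 0 (fun v => kI a v - gI a v + a * hI a v) (0 - F 0)).
  { apply HI_FTC.
    - intros x _. unfold F, kI, gI, hI, wk, wg, wh. assert (H := one_plus_sq_pos x).
      auto_derive. lra. field. lra.
    - intros x _.
      apply (continuous_plus (fun v => kI a v - gI a v) (fun v => a * hI a v)).
      apply (continuous_minus (kI a) (gI a)). apply cont_w_exp, wk_der. apply cont_w_exp, wg_der.
      apply (continuous_scal_r a (hI a)). apply cont_w_exp, wh_der.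
    - unfold F. replace (Finite 0) with (Rbar_mult (Rbar_opp 0) 0) by (simpl; f_equal; ring).
      apply (is_lim_mult (fun v => - (v * exp (- a * v))) (fun v => / (1 + v ^ 2)) p_infty (Rbar_opp 0) 0).
      apply (is_lim_opp (fun v => v * exp (- a * v)) p_infty 0). apply lim_xexp_neg; auto.
      apply lim_inv1sq. simpl; auto. }
  unfold F in HF. replace (- (0 * exp (- a * 0)) * / (1 + 0 ^ 2)) with 0 in HF by (simpl; field).
  replace (Gf a - a * Hf a) with ((0 - 0) + Gf a - a * Hf a) by ring.
  apply HI_ext with (fun v => (kI a v - gI a v + a * hI a v) + gI a v - a * hI a v). intros; ring.
  apply HI_minus. apply HI_plus; auto. apply HI_G; auto. apply HI_scal. apply HI_H; auto.
Qed.

Lemma exp_param_bound (w : R -> R) a x v : 0 < a -> Rabs (x - a) < a / 2 -> 0 <= v -> 0 <= w v <= 1 ->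
  Rabs (w v * exp (- x * v) - w v * exp (- a * v) - (x - a) * (- (v * w v) * exp (- a * v)))
    <= (x - a) ^ 2 * (v ^ 2 * exp (- (a / 2) * v)).
Proof.
  intros Ha Hx Hv Hw.
  assert (T := taylor2 (fun t => exp (- t * v)) (fun t => - v * exp (- t * v)) (fun t => v ^ 2 * exp (- t * v))
                  a x (v ^ 2 * exp (- (a / 2) * v))).
  cbv beta in T.
  assert (Hab : forall t, Rmin a x <= t <= Rmax a x -> a / 2 <= t).
  { intros t Ht. apply Rabs_def2 in Hx. assert (Rmin a x >= a / 2).
    { unfold Rmin. destruct (Rle_dec a x); lra. } lra. }
  assert (T' : Rabs (exp (- x * v) - exp (- a * v) - (x - a) * (- v * exp (- a * v))) <=
               v ^ 2 * exp (- (a / 2) * v) * (x - a) ^ 2).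
  { apply T.
    - intros t _. auto_derive; auto. ring.
    - intros t _. auto_derive; auto. ring.
    - intros t Ht. specialize (Hab t Ht). rewrite Rabs_right.
      apply Rmult_le_compat_l. apply pow2_ge_0.
      apply exp_mono. nra.
      apply Rle_ge. assert (0 < exp (- t * v)) by apply exp_pos. assert (0 <= v ^ 2) by apply pow2_ge_0. nra. }
  replace (w v * exp (- x * v) - w v * exp (- a * v) - (x - a) * (- (v * w v) * exp (- a * v)))
    with (w v * (exp (- x * v) - exp (- a * v) - (x - a) * (- v * exp (- a * v)))) by ring.
  rewrite Rabs_mult. rewrite (Rabs_right (w v)) by lra.
  assert (0 <= Rabs (exp (- x * v) - exp (- a * v) - (x - a) * (- v * exp (- a * v)))) by apply Rabs_pos.
  assert (0 <= v ^ 2 * exp (- (a / 2) * v) * (x - a) ^ 2).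
  { assert (0 < exp (- (a / 2) * v)) by apply exp_pos. assert (0 <= v ^ 2) by apply pow2_ge_0.
    assert (0 <= (x - a) ^ 2) by apply pow2_ge_0. apply Rmult_le_pos; [apply Rmult_le_pos|]; lra. }
  apply Rle_trans with (1 * (v ^ 2 * exp (- (a / 2) * v) * (x - a) ^ 2)).
  apply Rmult_le_compat; lra. lra.
Qed.

Lemma HI_deriv_w (w : R -> R) (a : R) (I : R -> R) (J : R) : 0 < a -> (forall v, 0 <= v -> 0 <= w v <= 1) ->
  (forall x, 0 < x -> HI 0 (fun v => w v * exp (- x * v)) (I x)) ->
  HI 0 (fun v => - (v * w v) * exp (- a * v)) J -> is_derive I a J.
Proof.
  intros Ha Hw HI' HJ.
  apply (HI_deriv_param 0 a (a / 2) J (2 / (a / 2) ^ 3) (fun x v => w v * exp (- x * v)) I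
           (fun v => - (v * w v) * exp (- a * v)) (fun v => v ^ 2 * exp (- (a / 2) * v))).
  - lra.
  - intros x Hx. apply HI'. apply Rabs_def2 in Hx. lra.
  - auto.
  - apply HI_x2exp. lra.
  - intros x v Hx Hv. apply exp_param_bound; auto.
Qed.

Lemma G_derive a : 0 < a -> is_derive Gf a (- Hf a).
Proof.
  intros Ha. apply (HI_deriv_w wg a Gf (- Hf a) Ha).
  - intros; apply wg_bound.
  - intros x Hx. apply HI_G; auto.
  - apply HI_ext with (fun v => - hI a v). intros x _. unfold hI, wh, wg. unfold Rdiv. ring.
    apply HI_opp. apply HI_H; auto.
Qed.

Lemma H_derive a : 0 < a -> is_derive Hf a (Gf a - / a).
Proof.
  intros Ha. apply (HI_deriv_w wh a Hf (Gf a - / a) Ha).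
  - intros; apply wh_bound; auto.
  - intros x Hx. apply HI_H; auto.
  - apply HI_ext with (fun v => gI a v - exp (- a * v)). intros x _. unfold gI, wh, wg.
    assert (H := one_plus_sq_pos x). field. lra.
    apply HI_minus. apply HI_G; auto. apply HI_exp; auto.
Qed.

Definition small (f : R -> R) : Prop :=
  forall eps, 0 < eps -> exists delta, 0 < delta /\ forall a, 0 < a < delta -> Rabs (f a) <= eps.

Lemma small_le (f g : R -> R) : (forall a, 0 < a < 1 -> Rabs (f a) <= g a) -> small g -> small f.
Proof.
  intros H Hg eps Heps. destruct (Hg eps Heps) as [d [Hd Hb]].
  exists (Rmin d 1). split. apply Rmin_pos; lra.
  intros a Ha. assert (Rmin d 1 <= d) by apply Rmin_l. assert (Rmin d 1 <= 1) by apply Rmin_r.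
  eapply Rle_trans. apply H; lra. specialize (Hb a ltac:(lra)). apply Rabs_le_between in Hb. lra.
Qed.

Lemma small_plus (f g : R -> R) : small f -> small g -> small (fun a => f a + g a).
Proof.
  intros Hf Hg eps Heps. destruct (Hf (eps/2) ltac:(lra)) as [d1 [Hd1 H1]].
  destruct (Hg (eps/2) ltac:(lra)) as [d2 [Hd2 H2]].
  exists (Rmin d1 d2). split. apply Rmin_pos; lra.
  intros a Ha. assert (Rmin d1 d2 <= d1) by apply Rmin_l. assert (Rmin d1 d2 <= d2) by apply Rmin_r.
  eapply Rle_trans. apply Rabs_triang. specialize (H1 a ltac:(lra)). specialize (H2 a ltac:(lra)). lra.
Qed.

Lemma small_scal (c : R) (f : R -> R) : small f -> small (fun a => c * f a).
Proof.
  intros Hf eps Heps.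
  assert (Hc : 0 < Rabs c + 1) by (assert (0 <= Rabs c) by apply Rabs_pos; lra).
  destruct (Hf (eps / (Rabs c + 1))) as [d [Hd H]]. apply Rdiv_lt_0_compat; lra.
  exists d. split; auto. intros a Ha. specialize (H a Ha). rewrite Rabs_mult.
  apply Rle_trans with ((Rabs c + 1) * (eps / (Rabs c + 1))).
  apply Rmult_le_compat. apply Rabs_pos. apply Rabs_pos. lra. auto.
  right; field; lra.
Qed.

Lemma small_id : small (fun a => a).
Proof.
  intros eps Heps. exists eps. split; auto. intros a Ha. rewrite Rabs_right by lra. lra.
Qed.

Lemma small_aln : small (fun a => a * ln a).
Proof.
  intros eps Heps.
  assert (H := proj1 (lim_pinf_eps (fun y => ln y / y) 0) is_lim_div_ln_p (mkposreal _ Heps)).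
  destruct H as [M HM]. simpl in HM.
  exists (/ (Rmax M 1)). split. apply Rinv_0_lt_compat. assert (H1 := Rmax_r M 1). lra.
  intros a Ha. assert (H1 := Rmax_r M 1). assert (H2 := Rmax_l M 1).
  assert (Hia : Rmax M 1 < / a).
  { replace (Rmax M 1) with (/ / Rmax M 1) by (field; lra). apply Rinv_lt_contravar. nra. lra. }
  specialize (HM (/ a) ltac:(lra)). rewrite Rminus_0_r in HM.
  replace (a * ln a) with (- (ln (/ a) / / a)). rewrite Rabs_Ropp. lra.
  rewrite ln_Rinv by lra. field. lra.
Qed.

Lemma SinInt_bound a : 0 <= a -> Rabs (SinInt a) <= a.
Proof.
  intros Ha. unfold SinInt. replace a with (a * 1) at 2 by ring.
  apply RInt_abs_bound; auto. apply sinc_cont. intros; apply sinc_bound.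
Qed.

Lemma C0_bound a : 0 <= a -> Rabs (RInt cosm1_div 0 a) <= a * a.
Proof.
  intros Ha. apply RInt_abs_bound; auto. apply cosm1_cont. intros t Ht.
  eapply Rle_trans. apply cosm1_bound. rewrite Rabs_right; lra.
Qed.

Lemma CosInt_bound a : 0 < a < 1 -> Rabs (CosInt a) <= Rabs euler_gamma + Rabs (ln a) + a.
Proof.
  intros Ha. unfold CosInt. assert (H := C0_bound a ltac:(lra)).
  eapply Rle_trans. apply Rabs_triang. eapply Rle_trans. apply Rplus_le_compat_r. apply Rabs_triang.
  assert (a * a <= a) by nra. lra.
Qed.

Lemma abs_aln a : 0 < a -> a * Rabs (ln a) = Rabs (a * ln a).
Proof. intros Ha. rewrite Rabs_mult. rewrite (Rabs_right a) by lra. auto. Qed.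

Lemma P_small : small (fun a => Pf a - PI / 2).
Proof.
  apply small_le with (fun a => (PI / 2 + 1 + Rabs euler_gamma + 1) * a + Rabs (a * ln a)).
  - intros a Ha. unfold Pf.
    replace (PI / 2 * cos a - cos a * SinInt a + sin a * CosInt a - PI / 2)
      with (PI / 2 * (cos a - 1) - cos a * SinInt a + sin a * CosInt a) by ring.
    assert (H1 := cos_taylor a). assert (H2 := SinInt_bound a ltac:(lra)). assert (H3 := CosInt_bound a Ha).
    assert (H4 : Rabs (sin a) <= a) by (eapply Rle_trans; [apply abs_sin_le| rewrite Rabs_right; lra]).
    assert (H5 : Rabs (cos a) <= 1) by (apply Rabs_le, COS_bound).
    assert (Hpi : 0 < PI) by apply PI_RGT_0.
    assert (a ^ 2 <= a) by (simpl; nra).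
    eapply Rle_trans. apply Rabs_triang. eapply Rle_trans. apply Rplus_le_compat_r. apply Rabs_triang.
    rewrite !Rabs_mult. rewrite Rabs_Ropp, Rabs_mult.
    rewrite (Rabs_right (PI / 2)) by lra.
    assert (0 <= Rabs (SinInt a)) by apply Rabs_pos. assert (0 <= Rabs (CosInt a)) by apply Rabs_pos.
    assert (0 <= Rabs (ln a)) by apply Rabs_pos. assert (0 <= Rabs euler_gamma) by apply Rabs_pos.
    assert (0 <= Rabs (sin a)) by apply Rabs_pos. assert (0 <= Rabs (cos a)) by apply Rabs_pos.
    assert (Rabs (sin a) * Rabs (CosInt a) <= a * (Rabs euler_gamma + Rabs (ln a) + a)) by (apply Rmult_le_compat; lra).
    rewrite (Rabs_right a) by lra. nra.
  - apply small_plus. apply small_scal, small_id.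
    intros eps Heps. destruct (small_aln eps Heps) as [d [Hd H]]. exists d. split; auto.
    intros a Ha. rewrite Rabs_Rabsolu. auto.
Qed.

Lemma Q_small : small (fun a => Qf a + ln a + euler_gamma).
Proof.
  apply small_le with (fun a => (PI / 2 + 1 + 1 + Rabs euler_gamma) * a + Rabs (a * ln a)).
  - intros a Ha. unfold Qf, CosInt.
    replace (PI / 2 * sin a - cos a * (euler_gamma + ln a + RInt cosm1_div 0 a) - sin a * SinInt a + ln a + euler_gamma)
      with (PI / 2 * sin a - sin a * SinInt a - cos a * RInt cosm1_div 0 a - (cos a - 1) * euler_gamma - (cos a - 1) * ln a) by ring.
    assert (H1 := cos_taylor a). assert (H2 := SinInt_bound a ltac:(lra)). assert (H3 := C0_bound a ltac:(lra)).
    assert (H4 : Rabs (sin a) <= a) by (eapply Rle_trans; [apply abs_sin_le| rewrite Rabs_right; lra]).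
    assert (H5 : Rabs (cos a) <= 1) by (apply Rabs_le, COS_bound).
    assert (Hpi : 0 < PI) by apply PI_RGT_0.
    assert (a ^ 2 <= a) by (simpl; nra).
    assert (B1 : Rabs (PI / 2 * sin a) <= PI / 2 * a).
    { rewrite Rabs_mult, (Rabs_right (PI/2)) by lra. apply Rmult_le_compat_l; lra. }
    assert (B2 : Rabs (sin a * SinInt a) <= a * a).
    { rewrite Rabs_mult. apply Rmult_le_compat; auto; apply Rabs_pos. }
    assert (B3 : Rabs (cos a * RInt cosm1_div 0 a) <= a * a).
    { rewrite Rabs_mult. replace (a * a) with (1 * (a * a)) by ring. apply Rmult_le_compat; auto; apply Rabs_pos. }
    assert (B4 : Rabs ((cos a - 1) * euler_gamma) <= a * Rabs euler_gamma).
    { rewrite Rabs_mult. apply Rmult_le_compat_r. apply Rabs_pos. lra. }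
    assert (B5 : Rabs ((cos a - 1) * ln a) <= Rabs (a * ln a)).
    { rewrite !Rabs_mult. rewrite (Rabs_right a) by lra. apply Rmult_le_compat_r. apply Rabs_pos. lra. }
    apply Rabs_le_between in B1. apply Rabs_le_between in B2. apply Rabs_le_between in B3.
    apply Rabs_le_between in B4. apply Rabs_le_between in B5.
    apply Rabs_le. split; nra.
  - apply small_plus. apply small_scal, small_id.
    intros eps Heps. destruct (small_aln eps Heps) as [d [Hd H]]. exists d. split; auto.
    intros a Ha. rewrite Rabs_Rabsolu. auto.
Qed.

Lemma atan_le_id y : 0 <= y -> atan y <= y.
Proof.
  intros Hy. assert (H := taylor1 atan (fun t => / (1 + t ^ 2)) 0 y 1).
  rewrite atan_0, !Rminus_0_r, (Rabs_right y) in H by lra.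
  assert (Rabs (atan y) <= 1 * y). apply H.
  - intros t _. assert (Hd := is_derive_atan t). unfold Rsqr in Hd. replace (t ^ 2) with (t * t) by ring. exact Hd.
  - intros t _. assert (Hb := wg_bound t). unfold wg in Hb. rewrite Rabs_right; lra.
  - apply Rabs_le_between in H0. lra.
Qed.

Lemma G_small : small (fun a => Gf a - PI / 2).
Proof.
  intros eps Heps.
  set (R0 := 2 / eps).
  assert (HR : 0 < R0) by (unfold R0; apply Rdiv_lt_0_compat; lra).
  exists (eps / (2 * R0 * R0)). split. apply Rdiv_lt_0_compat; nra.
  intros a Ha.
  set (phi := fun v => wg v * (1 - exp (- a * v))).
  assert (Hphi : HI 0 phi (PI / 2 - Gf a)).
  { apply HI_ext with (fun v => wg v - gI a v). intros; unfold phi, gI; ring.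
    apply HI_minus. apply HI_ext with (fun v => / (1 + v ^ 2)). auto. apply HI_atan. apply HI_G; lra. }
  assert (Hc : forall x, continuous phi x).
  { intros x. unfold phi. apply (ex_derive_continuous (K:=R_AbsRing) (V:=R_NormedModule) (fun v => wg v * (1 - exp (- a * v)))).
    apply (ex_derive_mult wg (fun v => 1 - exp (- a * v))). apply wg_der. auto_derive; auto. }
  assert (Hp : forall v, 0 <= v -> 0 <= phi v <= a * v).
  { intros v Hv. unfold phi. assert (H1 := wg_bound v). assert (H2 := exp_ineq1_le (- a * v)).
    assert (exp (- a * v) <= 1) by (rewrite <- exp_0; apply exp_mono; nra). split. nra. nra. }
  assert (HexR : forall u w, ex_RInt phi u w) by (intros; apply ex_RInt_cont_all; auto).
  assert (Hup : PI / 2 - Gf a <= a * R0 * R0 + / R0).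
  { apply (HI_cst_le 0 phi); auto. intros b Hb.
    assert (Hfirst : forall c, 0 <= c <= R0 -> RInt phi 0 c <= a * R0 * R0).
    { intros c Hc'. assert (H := RInt_abs_bound phi c (a * R0) ltac:(lra) Hc).
      assert (RInt phi 0 c <= c * (a * R0)).
      { eapply Rle_trans. apply RRle_abs. apply H. intros t Ht. specialize (Hp t ltac:(lra)).
        rewrite Rabs_right by lra. nra. }
      assert (c * (a * R0) <= R0 * (a * R0)) by (apply Rmult_le_compat_r; [apply Rmult_le_pos|]; lra).
      lra. }
    assert (Hinv : 0 < / R0) by (apply Rinv_0_lt_compat; lra).
    destruct (Rle_dec b R0).
    - specialize (Hfirst b ltac:(lra)). lra.
    - rewrite <- (RInt_Chasles phi 0 R0 b) by auto. unfold plus; simpl.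
      specialize (Hfirst R0 ltac:(lra)).
      assert (Hsec : RInt phi R0 b <= atan b - atan R0).
      { assert (E : RInt (fun v => / (1 + v ^ 2)) R0 b = atan b - atan R0).
        { apply is_RInt_unique. apply (is_RInt_derive atan (fun v => / (1 + v ^ 2))).
          intros x _. assert (Hd := is_derive_atan x). unfold Rsqr in Hd. replace (x ^ 2) with (x * x) by ring. exact Hd.
          intros x _. apply cont_inv1sq. }
        rewrite <- E. apply RInt_le. lra. auto. apply ex_RInt_cont_all, cont_inv1sq.
        intros x Hx. unfold phi. assert (H1 := wg_bound x). unfold wg in *.
        assert (0 < exp (- a * x)) by apply exp_pos. nra. }
      assert (atan b < PI / 2) by apply atan_bound.
      assert (Hat : PI / 2 - atan R0 = atan (/ R0)) by (rewrite atan_inv; auto; ring).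
      assert (atan (/ R0) <= / R0) by (apply atan_le_id; lra).
      lra. }
  assert (Hlow : 0 <= PI / 2 - Gf a).
  { apply (HI_cst_ge 0 phi); auto. intros b Hb. apply RInt_ge_0; auto. intros x Hx; apply Hp; lra. }
  rewrite Rabs_left1 by lra.
  assert (a * R0 * R0 <= eps / 2).
  { destruct Ha as [Ha1 Ha2]. apply Rmult_lt_compat_r with (r := 2 * R0 * R0) in Ha2; [|nra].
    replace (eps / (2 * R0 * R0) * (2 * R0 * R0)) with eps in Ha2 by (field; lra). nra. }
  assert (/ R0 = eps / 2) by (unfold R0; field; lra).
  lra.
Qed.

Definition qf (t : R) : R := if Req_EM_T t 0 then 1 else (1 - exp (- t)) / t.

Lemma qf_cont x : continuous qf x.
Proof.
  destruct (Req_dec x 0) as [Hx|Hx].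
  - subst. apply continuity_pt_filterlim. intros eps Heps.
    exists (Rmin 1 (eps / 3)). split. apply Rmin_pos; lra.
    intros t [_ Ht]. simpl in *. unfold R_dist in *. rewrite Rminus_0_r in Ht.
    assert (Ht1 : Rabs t <= 1) by (assert (Rmin 1 (eps/3) <= 1) by apply Rmin_l; lra).
    assert (Ht2 : Rabs t < eps / 3) by (assert (Rmin 1 (eps/3) <= eps/3) by apply Rmin_r; lra).
    unfold qf. destruct (Req_EM_T 0 0); [|congruence].
    destruct (Req_EM_T t 0) as [E|E].
    + subst. rewrite Rminus_eq_0, Rabs_R0. lra.
    + assert (T := taylor2 (fun s => exp (- s)) (fun s => - exp (- s)) (fun s => exp (- s)) 0 t 3).
      cbv beta in T. rewrite Ropp_0, exp_0 in T.
      assert (T' : Rabs (exp (- t) - 1 - (t - 0) * - 1) <= 3 * (t - 0) ^ 2).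
      { apply T.
        - intros; auto_derive; auto. ring.
        - intros; auto_derive; auto. ring.
        - intros s Hs. rewrite Rabs_right by (left; apply exp_pos).
          assert (Rmin 0 t >= -1).
          { apply Rabs_le_between in Ht1. unfold Rmin. destruct (Rle_dec 0 t); lra. }
          apply Rle_trans with (exp 1). apply exp_mono. lra. apply exp_le_3. }
      replace ((1 - exp (- t)) / t - 1) with (- (exp (- t) - 1 - (t - 0) * - 1) / t) by (field; auto).
      unfold Rdiv. rewrite Rabs_mult, Rabs_Ropp, Rabs_Rinv by auto.
      assert (Hp : 0 < Rabs t) by (apply Rabs_pos_lt; auto).
      apply Rmult_lt_reg_r with (Rabs t); auto. rewrite Rmult_assoc, Rinv_l by lra. rewrite Rmult_1_r.
      eapply Rle_lt_trans. apply T'. rewrite Rminus_0_r.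
      assert (t ^ 2 = Rabs t * Rabs t).
      { assert (0 <= t * t) by apply Rle_0_sqr. rewrite <- Rabs_mult. rewrite Rabs_right by lra. ring. }
      rewrite H. assert (3 * Rabs t < eps) by lra.
      apply Rmult_lt_compat_r with (r := Rabs t) in H0; auto. lra.
  - apply continuous_ext_loc with (fun t => (1 - exp (- t)) / t).
    + eapply filter_imp. 2: apply locally_neq0; eauto. intros y Hy. unfold qf.
      destruct (Req_EM_T y 0); [congruence| auto].
    + apply (cont_div_id (fun t => 1 - exp (- t))); auto. intros y.
      apply derivable_pt_minus. apply derivable_pt_const.
      apply derivable_pt_comp. apply derivable_pt_opp. apply derivable_pt_id. apply derivable_pt_exp.
Qed.

Lemma qf_bound t : 0 < t -> 0 <= qf t <= 1.
Proof.
  intros Ht. unfold qf. destruct (Req_EM_T t 0); [lra|].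
  assert (H1 := exp_ineq1_le (- t)). assert (exp (- t) <= 1) by (rewrite <- exp_0; apply exp_mono; lra).
  split. apply Rdiv_le_0_compat; lra.
  apply Rmult_le_reg_r with t; auto. unfold Rdiv. rewrite Rmult_assoc, Rinv_l by lra. lra.
Qed.

Definition Iq : R := RInt qf 0 1.

Definition eI (t : R) : R := exp (- t) / t.

Lemma eI_cont x : 0 < x -> continuous eI x.
Proof.
  intros Hx. unfold eI. apply (cont_div_id (fun t => exp (- t))). lra.
  intros y. apply derivable_pt_comp. apply derivable_pt_opp. apply derivable_pt_id. apply derivable_pt_exp.
Qed.

Lemma HI_exp_base1 : HI 1 (fun t => exp (- 1 * t)) (/ 1 - RInt (fun t => exp (- 1 * t)) 0 1).
Proof. apply HI_base_shift. lra. apply HI_exp. lra. Qed.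

Definition Ef : R := real (Lim (fun b => RInt eI 1 b) p_infty).

Lemma HI_E : HI 1 eI Ef.
Proof.
  apply HI_exLim. eapply HI_comp. 3: apply HI_exp_base1.
  - intros; apply eI_cont; lra.
  - intros x Hx. unfold eI. rewrite Rabs_right. replace (- 1 * x) with (- x) by ring.
    unfold Rdiv. replace (exp (- x)) with (exp (- x) * 1) at 2 by ring.
    apply Rmult_le_compat_l. left; apply exp_pos. rewrite <- Rinv_1. apply Rinv_le_contravar; lra.
    apply Rle_ge, Rdiv_le_0_compat. left; apply exp_pos. lra.
Qed.

Definition gam : R := Iq - Ef.

Lemma bernoulli (h : R) (n : nat) : -1 <= h -> 1 + INR n * h <= (1 + h) ^ n.
Proof.
  intros Hh. induction n.
  - simpl. lra.
  - rewrite S_INR. simpl. assert (0 <= INR n) by apply pos_INR.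
    assert (0 <= 1 + h) by lra.
    apply Rle_trans with ((1 + h) * (1 + INR n * h)). nra.
    apply Rmult_le_compat_l; auto.
Qed.

Lemma exp_pow_n (y : R) (n : nat) : exp y ^ n = exp (INR n * y).
Proof.
  induction n. simpl. rewrite Rmult_0_l, exp_0. auto.
  rewrite S_INR. simpl. rewrite IHn. rewrite <- exp_plus. f_equal. ring.
Qed.

Lemma key_ineq (m : nat) (t : R) : (1 <= m)%nat -> 0 <= t <= INR m ->
  0 <= exp (- t) - (1 - t / INR m) ^ m <= t ^ 2 * exp (- t) / INR m.
Proof.
  intros Hm Ht. remember (INR m) as N eqn:HNm.
  assert (HN : 1 <= N) by (rewrite HNm; apply (le_INR 1 m) in Hm; simpl in Hm; auto).
  remember (t / N) as x eqn:Hxd.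
  assert (Hx : 0 <= x <= 1).
  { rewrite Hxd. split. apply Rdiv_le_0_compat; lra.
    apply Rmult_le_reg_r with N. lra. unfold Rdiv. rewrite Rmult_assoc, Rinv_l by lra. lra. }
  assert (Et : t = N * x) by (rewrite Hxd; field; lra).
  assert (Eexp : exp (- t) = exp (- x) ^ m).
  { rewrite exp_pow_n. f_equal. rewrite <- HNm. rewrite Et. ring. }
  split.
  - rewrite Eexp. assert ((1 - x) ^ m <= exp (- x) ^ m).
    { apply pow_incr. split. lra. assert (H := exp_ineq1_le (- x)). lra. }
    lra.
  - assert (H1 : 1 - x ^ 2 <= (1 - x) * exp x).
    { assert (H := exp_ineq1_le x). nra. }
    assert (H2 : (1 - x ^ 2) ^ m <= ((1 - x) * exp x) ^ m).
    { apply pow_incr. split; auto. nra. }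
    assert (H3 : 1 + INR m * (- x ^ 2) <= (1 - x ^ 2) ^ m).
    { replace (1 - x ^ 2) with (1 + - x ^ 2) by ring. apply bernoulli. nra. }
    rewrite Rpow_mult_distr in H2. rewrite exp_pow_n in H2. rewrite <- HNm in H2, H3.
    assert (E2 : exp (N * x) * exp (- t) = 1).
    { rewrite <- exp_plus. rewrite Et. replace (N * x + - (N * x)) with 0 by ring. apply exp_0. }
    assert (Hpos : 0 < exp (- t)) by apply exp_pos.
    assert (H4 : (1 - N * x ^ 2) * exp (- t) <= (1 - x) ^ m).
    { apply Rmult_le_compat_r with (r := exp (- t)) in H2; [|lra].
      rewrite Rmult_assoc, E2, Rmult_1_r in H2. nra. }
    assert (E3 : N * x ^ 2 = t ^ 2 / N) by (rewrite Et; field; lra).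
    rewrite E3 in H4. unfold Rdiv in *. nra.
Qed.

Lemma sum_div (f : nat -> R) (N : R) (n : nat) : sum_f_R0 (fun k => f k / N) n = sum_f_R0 f n / N.
Proof.
  induction n. simpl. auto. simpl. rewrite IHn. unfold Rdiv. ring.
Qed.

Lemma harm_term (N : R) (k : nat) : 0 < N -> is_RInt (fun t => (1 - t / N) ^ k / N) 0 N (/ INR (S k)).
Proof.
  intros HN. assert (HS : 0 < INR (S k)) by (apply lt_0_INR; lia).
  replace (/ INR (S k)) with (minus (- (1 - N / N) ^ S k / INR (S k)) (- (1 - 0 / N) ^ S k / INR (S k))).
  2:{ replace (1 - N / N) with 0 by (field; lra).
      replace (1 - 0 / N) with 1 by (field; lra). rewrite pow1. rewrite pow_i by lia.
      unfold minus, plus, opp; simpl. field. change (match k with 0%nat => 1 | S _ => INR k + 1 end) with (INR (S k)). lra. }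
  apply (is_RInt_derive (fun t => - (1 - t / N) ^ S k / INR (S k))).
  - intros x _. auto_derive; [auto|].
    change (match k with 0%nat => 1 | S _ => INR k + 1 end) with (INR (S k)).
    cut (forall y : R, - (- (1 * / N) * (INR (S k) * (1 + - (y * / N)) ^ k)) * / INR (S k) = (1 - y / N) ^ k / N).
    intros Hc; apply Hc. intros y. replace (1 + - (y * / N)) with (1 - y / N) by (unfold Rdiv; ring). field. lra.
  - intros x _. apply (ex_derive_continuous (K:=R_AbsRing) (V:=R_NormedModule) (fun t => (1 - t / N) ^ k / N)).
    auto_derive. lra.
Qed.

Lemma harm_RInt (N : R) (j : nat) : 0 < N ->
  is_RInt (fun t => sum_f_R0 (fun k => (1 - t / N) ^ k / N) j) 0 N (sum_f_R0 (fun k => / INR (S k)) j).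
Proof.
  intros HN. induction j.
  - exact (harm_term N 0 HN).
  - exact (is_RInt_plus (fun t => sum_f_R0 (fun k => (1 - t / N) ^ k / N) j) (fun t => (1 - t / N) ^ S j / N) 0 N _ _ IHj (harm_term N (S j) HN)).
Qed.

Lemma geom_pN (N t : R) (m : nat) : (1 <= m)%nat -> 0 < N -> t <> 0 ->
  sum_f_R0 (fun k => (1 - t / N) ^ k / N) (pred m) = (1 - (1 - t / N) ^ m) / t.
Proof.
  intros Hm HN Ht. rewrite sum_div. rewrite tech3.
  replace (S (pred m)) with m by lia. field. split; auto. lra.
  intros E. assert (t / N = 0) by lra. unfold Rdiv in H. apply Rmult_integral in H. destruct H; auto.
  apply Rinv_neq_0_compat in H; lra.
Qed.

Lemma RInt_inv_ln (N : R) : 1 <= N -> RInt (fun t => / t) 1 N = ln N.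
Proof.
  intros HN. apply is_RInt_unique. replace (ln N) with (minus (ln N) (ln 1)) by (unfold minus, plus, opp; simpl; rewrite ln_1; ring).
  apply (is_RInt_derive ln (fun t => / t)).
  - intros x Hx. rewrite Rmin_left in Hx by lra. apply is_derive_ln. lra.
  - intros x Hx. rewrite Rmin_left in Hx by lra.
    apply (ex_derive_continuous (K:=R_AbsRing) (V:=R_NormedModule) (fun t => / t)). auto_derive. lra.
Qed.

Lemma aux_ineq t N : 0 <= t <= 1 -> 0 < / N -> t ^ 2 * exp (- t) * / N <= 1 * / N * t.
Proof.
  intros Ht HN. assert (0 < exp (- t)) by apply exp_pos.
  assert (exp (- t) <= 1) by (rewrite <- exp_0; apply exp_mono; lra).
  assert (Hq : 0 <= t * t * / N) by (apply Rmult_le_pos; [nra|lra]).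
  apply Rle_trans with (t * / N * t).
  - replace (t ^ 2 * exp (- t) * / N) with ((t * t * / N) * exp (- t)) by ring.
    replace (t * / N * t) with ((t * t * / N) * 1) by ring. apply Rmult_le_compat_l; lra.
  - replace (1 * / N * t) with (t * / N * 1) by ring. apply Rmult_le_compat_l. apply Rmult_le_pos; lra. lra.
Qed.

Lemma harm_bound (m : nat) : (1 <= m)%nat ->
  Rabs (harmonic m - ln (INR m) - gam) <= 2 / INR m + Rabs (Ef - RInt eI 1 (INR m)).
Proof.
  intros Hm. remember (INR m) as N eqn:HNm.
  assert (HN : 1 <= N) by (rewrite HNm; apply (le_INR 1 m) in Hm; simpl in Hm; auto).
  remember (fun t => sum_f_R0 (fun k => (1 - t / N) ^ k / N) (pred m)) as pN eqn:HpN.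
  remember (fun t => (1 - t / N) ^ m / t) as r eqn:Hr.
  assert (A1 : is_RInt pN 0 N (harmonic m)).
  { rewrite HpN. unfold harmonic. apply harm_RInt. lra. }
  assert (ExpN : forall u v, 0 <= u <= v -> v <= N -> ex_RInt pN u v).
  { intros u v Hu Hv. apply (ex_RInt_Chasles_2 pN 0 u v). lra.
    apply (ex_RInt_Chasles_1 pN 0 v N). lra. eexists; apply A1. }
  assert (Hgeo : forall t, 0 < t -> pN t = (1 - (1 - t / N) ^ m) / t).
  { intros t Ht. rewrite HpN. apply geom_pN; auto; lra. }
  assert (Hrc : forall x, 0 < x -> continuous r x).
  { intros x Hx. rewrite Hr. apply (ex_derive_continuous (K:=R_AbsRing) (V:=R_NormedModule) (fun t => (1 - t / N) ^ m / t)).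
    auto_derive. lra. }
  assert (Hinvc : forall x, 0 < x -> continuous (fun t => / t) x).
  { intros x Hx. apply (ex_derive_continuous (K:=R_AbsRing) (V:=R_NormedModule) (fun t => / t)). auto_derive. lra. }
  assert (ExR : forall u v, 0 < u <= v -> ex_RInt r u v).
  { intros u v Huv. apply (ex_RInt_continuous (V:=R_CompleteNormedModule)). intros z Hz.
    rewrite Rmin_left, Rmax_right in Hz by lra. apply Hrc. lra. }
  assert (ExI : forall u v, 0 < u <= v -> ex_RInt (fun t => / t) u v).
  { intros u v Huv. apply (ex_RInt_continuous (V:=R_CompleteNormedModule)). intros z Hz.
    rewrite Rmin_left, Rmax_right in Hz by lra. apply Hinvc. lra. }
  assert (ExE : forall u v, 0 < u <= v -> ex_RInt eI u v).
  { intros u v Huv. apply (ex_RInt_continuous (V:=R_CompleteNormedModule)). intros z Hz.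
    rewrite Rmin_left, Rmax_right in Hz by lra. apply eI_cont. lra. }
  assert (A2 : harmonic m = RInt pN 0 1 + RInt pN 1 N).
  { rewrite <- (is_RInt_unique _ _ _ _ A1). rewrite <- (RInt_Chasles pN 0 1 N).
    reflexivity. apply ExpN; lra. apply ExpN; lra. }
  assert (A3 : RInt pN 1 N = ln N - RInt r 1 N).
  { rewrite <- RInt_inv_ln by auto.
    rewrite <- (RInt_minus (fun t => / t) r) by (apply ExI || apply ExR; lra).
    apply RInt_ext. intros x Hx. rewrite Rmin_left, Rmax_right in Hx by lra.
    rewrite Hgeo by lra. rewrite Hr. unfold minus, plus, opp; simpl. field. lra. }
  assert (A4 : Rabs (RInt pN 0 1 - Iq) <= 1 / N).
  { unfold Iq.
    assert (Exq : ex_RInt qf 0 1) by (apply ex_RInt_cont_all, qf_cont).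
    replace (RInt pN 0 1 - RInt qf 0 1) with (RInt (fun t => pN t - qf t) 0 1).
    2:{ rewrite (RInt_minus pN qf) by (auto; apply ExpN; lra). reflexivity. }
    replace (1 / N) with ((1 - 0) * (1 / N)) by ring.
    apply (norm_RInt_le_const (V:=R_NormedModule) (fun t => pN t - qf t) 0 1 _ (1 / N)). lra.
    - intros t Ht. destruct (Req_dec t 0) as [E|E].
      + rewrite E. replace (pN 0) with 1. unfold qf. destruct (Req_EM_T 0 0); [|congruence].
        unfold norm; simpl; unfold abs; simpl. rewrite Rminus_eq_0, Rabs_R0.
        apply Rlt_le, Rdiv_lt_0_compat; lra.
        rewrite HpN. rewrite sum_div. replace (1 - 0 / N) with 1 by (field; lra).
        rewrite (sum_eq _ (fun _ => 1)) by (intros; apply pow1).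
        rewrite sum_cte. replace (S (pred m)) with m by lia. rewrite <- HNm. field. lra.
      + rewrite Hgeo by lra. unfold qf. destruct (Req_EM_T t 0); [congruence|].
        unfold norm; simpl; unfold abs; simpl.
        replace ((1 - (1 - t / N) ^ m) / t - (1 - exp (- t)) / t) with ((exp (- t) - (1 - t / N) ^ m) / t) by (field; auto).
        assert (K := key_ineq m t Hm ltac:(rewrite <- HNm; lra)). rewrite <- HNm in K.
        assert (exp (- t) <= 1) by (rewrite <- exp_0; apply exp_mono; lra).
        rewrite Rabs_right. 2: apply Rle_ge, Rdiv_le_0_compat; lra.
        apply Rmult_le_reg_r with t. lra. unfold Rdiv. rewrite Rmult_assoc, Rinv_l by lra.
        unfold Rdiv in K. assert (0 < / N) by (apply Rinv_0_lt_compat; lra).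
        assert (t ^ 2 * exp (- t) * / N <= 1 * / N * t).
        { apply aux_ineq; lra. }
        lra.
    - apply (RInt_correct (V:=R_CompleteNormedModule)). apply (ex_RInt_minus pN qf). apply ExpN; lra. auto. }
  assert (Hxe : HI 0 (fun v => v * exp (- 1 * v)) (/ 1 ^ 2)) by (apply HI_xexp; lra).
  assert (Hxe1 : RInt (fun v => v * exp (- 1 * v)) 1 N <= 1).
  { assert (Hcx : forall x, continuous (fun v => v * exp (- 1 * v)) x).
    { intros x. apply (ex_derive_continuous (K:=R_AbsRing) (V:=R_NormedModule) (fun v => v * exp (- 1 * v))). auto_derive. auto. }
    assert (H1 : RInt (fun v => v * exp (- 1 * v)) 0 N <= / 1 ^ 2).
    { apply (HI_RInt_le 0 (fun v => v * exp (- 1 * v)) (/ 1 ^ 2) N); auto; [|lra].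
      intros x Hx; apply Rmult_le_pos; [lra | left; apply exp_pos]. }
    rewrite <- (RInt_Chasles _ 0 1 N) in H1 by (apply ex_RInt_cont_all; auto).
    assert (0 <= RInt (fun v => v * exp (- 1 * v)) 0 1).
    { apply RInt_ge_0. lra. apply ex_RInt_cont_all; auto. intros x Hx. cbv beta. apply Rmult_le_pos; [lra | left; apply exp_pos]. }
    unfold plus in H1; simpl in H1. replace (/ 1 ^ 2) with 1 in H1 by field. lra. }
  assert (A5 : 0 <= RInt eI 1 N - RInt r 1 N <= 1 / N).
  { rewrite <- (RInt_minus eI r) by (apply ExE || apply ExR; lra).
    assert (Exd : ex_RInt (fun t => minus (eI t) (r t)) 1 N) by (apply (ex_RInt_minus eI r); apply ExE || apply ExR; lra).
    split.
    - apply RInt_ge_0; auto. intros x Hx. unfold eI, minus, plus, opp; simpl. rewrite Hr.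
      assert (K := key_ineq m x Hm ltac:(rewrite <- HNm; lra)). rewrite <- HNm in K.
      replace (exp (- x) / x + - ((1 - x / N) ^ m / x)) with ((exp (- x) - (1 - x / N) ^ m) / x) by (field; lra).
      apply Rdiv_le_0_compat; lra.
    - apply Rle_trans with (RInt (fun v => v * exp (- 1 * v) / N) 1 N).
      + apply RInt_le; [lra | exact Exd | | ].
        apply ex_RInt_cont_all. intros x. apply (ex_derive_continuous (K:=R_AbsRing) (V:=R_NormedModule) (fun v => v * exp (- 1 * v) / N)). auto_derive. lra.
        intros x Hx. unfold eI, minus, plus, opp; simpl. rewrite Hr.
        assert (K := key_ineq m x Hm ltac:(rewrite <- HNm; lra)). rewrite <- HNm in K.
        replace (exp (- x) / x + - ((1 - x / N) ^ m / x)) with ((exp (- x) - (1 - x / N) ^ m) / x) by (field; lra).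
        replace (- 1 * x) with (- x) by ring.
        apply Rmult_le_reg_r with x. lra. unfold Rdiv. rewrite Rmult_assoc, Rinv_l by lra.
        unfold Rdiv in K. replace (x * exp (- x) * / N * x) with (x ^ 2 * exp (- x) * / N) by ring. lra.
      + assert (Exx : ex_RInt (fun v => v * exp (- 1 * v)) 1 N).
        { apply ex_RInt_cont_all. intros x. apply (ex_derive_continuous (K:=R_AbsRing) (V:=R_NormedModule) (fun v => v * exp (- 1 * v))). auto_derive. auto. }
        assert (E : RInt (fun v => v * exp (- 1 * v) / N) 1 N = / N * RInt (fun v => v * exp (- 1 * v)) 1 N).
        { apply is_RInt_unique. apply (is_RInt_ext (fun v => scal (/ N) (v * exp (- 1 * v)))).
          intros x _. unfold scal; simpl; unfold mult; simpl. field. lra.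
          apply (is_RInt_scal (V:=R_NormedModule)). apply (RInt_correct (V:=R_CompleteNormedModule)). exact Exx. }
        rewrite E. replace (1 / N) with (/ N * 1) by (field; lra). apply Rmult_le_compat_l. left; apply Rinv_0_lt_compat; lra. auto. }
  unfold gam. rewrite A2, A3.
  replace (RInt pN 0 1 + (ln N - RInt r 1 N) - ln N - (Iq - Ef))
    with ((RInt pN 0 1 - Iq) + (RInt eI 1 N - RInt r 1 N) + (Ef - RInt eI 1 N)) by ring.
  eapply Rle_trans. apply Rabs_triang. eapply Rle_trans. apply Rplus_le_compat_r. apply Rabs_triang.
  rewrite (Rabs_right (RInt eI 1 N - RInt r 1 N)) by lra.
  replace (2 / N) with (1 / N + 1 / N) by (field; lra). lra.
Qed.

Lemma euler_gamma_eq : euler_gamma = gam.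
Proof.
  unfold euler_gamma.
  assert (H : is_lim_seq (fun n => harmonic (S n) - ln (INR (S n))) gam).
  { apply is_lim_seq_spec. intros eps.
    assert (He := cond_pos eps).
    destruct HI_E as [_ HE].
    destruct (proj1 (lim_pinf_eps _ _) HE (mkposreal (eps / 2) ltac:(lra))) as [M HM]. simpl in HM.
    assert (HI := proj2 (is_lim_seq_spec INR p_infty) is_lim_seq_INR (Rmax M (4 / eps))).
    destruct HI as [N0 HN0]. exists N0. intros n Hn. specialize (HN0 n Hn).
    assert (Hm1 := Rmax_l M (4 / eps)). assert (Hm2 := Rmax_r M (4 / eps)).
    assert (HS : INR (S n) = INR n + 1) by apply S_INR.
    assert (Hb := harm_bound (S n) ltac:(lia)).
    assert (H4 : 0 < 4 / eps) by (apply Rdiv_lt_0_compat; lra).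
    assert (HM' := HM (INR (S n)) ltac:(lra)). rewrite Rabs_minus_sym in HM'.
    assert (H2 : 2 / INR (S n) < eps / 2).
    { apply Rmult_lt_reg_r with (INR (S n)). lra. unfold Rdiv. rewrite Rmult_assoc, Rinv_l by lra.
      assert (Hq : 4 / eps < INR (S n)) by lra.
      apply Rmult_lt_compat_l with (r := eps / 2) in Hq; [|lra].
      replace (eps / 2 * (4 / eps)) with 2 in Hq by (field; lra). lra. }
    lra. }
  rewrite (is_lim_seq_unique _ _ H). reflexivity.
Qed.

Lemma c1_val : RInt wh 0 1 = ln 2 / 2.
Proof.
  apply is_RInt_unique.
  replace (ln 2 / 2) with (minus (ln (1 + 1 ^ 2) / 2) (ln (1 + 0 ^ 2) / 2)).
  2:{ assert (E0 : ln (1 + 0 ^ 2) = 0) by (replace (1 + 0 ^ 2) with 1 by ring; apply ln_1).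
      assert (E1 : 1 + 1 ^ 2 = 2) by ring. rewrite E0, E1. unfold minus, plus, opp; simpl. field. }
  apply (is_RInt_derive (fun v => ln (1 + v ^ 2) / 2)).
  - intros x _. unfold wh. assert (H := one_plus_sq_pos x). auto_derive. lra. field. lra.
  - intros x _. apply (ex_derive_continuous (K:=R_AbsRing) (V:=R_NormedModule) wh). apply wh_der.
Qed.

Lemma lim_ln_inv2 : is_lim (fun v => - (ln (1 + / v ^ 2)) / 2) p_infty 0.
Proof.
  replace (Finite 0) with (Finite (- ln (1 + 0) / 2)) by (f_equal; rewrite Rplus_0_r, ln_1; field).
  apply (is_lim_comp_continuous (fun v => / v ^ 2) (fun y => - ln (1 + y) / 2) p_infty 0).
  - apply lim_pinf_eps. intros eps. exists (/ eps + 1). intros x Hx.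
    assert (He := cond_pos eps). assert (Hie : 0 < / eps) by (apply Rinv_0_lt_compat; auto).
    assert (Hx2 : / eps < x ^ 2) by nra.
    rewrite Rminus_0_r. rewrite Rabs_right by (left; apply Rinv_0_lt_compat; nra).
    apply Rinv_lt_contravar in Hx2. rewrite Rinv_inv in Hx2. auto. nra.
  - apply (ex_derive_continuous (K:=R_AbsRing) (V:=R_NormedModule) (fun y => - ln (1 + y) / 2)).
    auto_derive. lra.
Qed.

Lemma HI_c2 : HI 1 (fun v => wg v / v) (ln 2 / 2).
Proof.
  replace (ln 2 / 2) with (0 - (ln 1 - ln (1 + 1 ^ 2) / 2)).
  2:{ rewrite ln_1. replace (1 + 1 ^ 2) with 2 by ring. field. }
  apply (HI_FTC 1 _ (fun v => ln v - ln (1 + v ^ 2) / 2)).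
  - intros x Hx. unfold wg. assert (H := one_plus_sq_pos x). auto_derive. lra. field. lra.
  - intros x Hx. unfold wg. assert (H := one_plus_sq_pos x).
    apply (ex_derive_continuous (K:=R_AbsRing) (V:=R_NormedModule) (fun v => / (1 + v ^ 2) / v)).
    auto_derive. lra.
  - apply (is_lim_ext_loc (fun v => - (ln (1 + / v ^ 2)) / 2)).
    + exists 0. intros v Hv. replace (1 + v ^ 2) with (v ^ 2 * (1 + / v ^ 2)) by (field; lra).
      rewrite ln_mult. replace (v ^ 2) with (v * v) by ring. rewrite ln_mult by lra. field.
      nra. assert (0 < / v ^ 2) by (apply Rinv_0_lt_compat; nra). lra.
    + apply lim_ln_inv2.
Qed.

Definition e1 (a v : R) : R := exp (- a * v) / v.
Definition t2 (a v : R) : R := exp (- a * v) * wg v / v.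

Lemma HI_E1 a : 0 < a < 1 -> HI 1 (e1 a) (RInt eI a 1 + Ef).
Proof.
  intros Ha.
  assert (H1 : HI a eI (RInt eI a 1 + Ef)).
  { apply HI_base_unshift. lra.
    apply (ex_RInt_continuous (V:=R_CompleteNormedModule)). intros z Hz.
    rewrite Rmin_left, Rmax_right in Hz by lra. apply eI_cont. lra.
    apply HI_E. }
  assert (H2 := HI_scale a a eI _ ltac:(lra) H1).
  replace (a / a) with 1 in H2 by (field; lra).
  apply HI_ext with (fun v => a * eI (a * v)); auto.
  intros x Hx. unfold eI, e1. replace (- (a * x)) with (- a * x) by ring. field. lra.
Qed.

Lemma t2_cont a x : 0 < x -> continuous (t2 a) x.
Proof.
  intros Hx. unfold t2, wg. apply (ex_derive_continuous (K:=R_AbsRing) (V:=R_NormedModule) (fun v => exp (- a * v) * / (1 + v ^ 2) / v)).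
  assert (H := one_plus_sq_pos x). auto_derive. lra.
Qed.

Lemma wg_over_v_cont x : 0 < x -> continuous (fun v => wg v / v) x.
Proof.
  intros Hx. unfold wg. apply (ex_derive_continuous (K:=R_AbsRing) (V:=R_NormedModule) (fun v => / (1 + v ^ 2) / v)).
  assert (H := one_plus_sq_pos x). auto_derive. lra.
Qed.

Definition T2f (a : R) : R := real (Lim (fun b => RInt (t2 a) 1 b) p_infty).

Lemma HI_T2 a : 0 < a -> HI 1 (t2 a) (T2f a).
Proof.
  intros Ha. apply HI_exLim.
  apply HI_comp with (fun v => exp (- a * v)) (/ a - RInt (fun v => exp (- a * v)) 0 1).
  - intros x Hx. apply t2_cont. lra.
  - intros x Hx. unfold t2. assert (Hw := wg_bound x). assert (He := exp_pos (- a * x)).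
    rewrite Rabs_right.
    + unfold Rdiv. rewrite Rmult_assoc. replace (exp (- a * x)) with (exp (- a * x) * 1) at 2 by ring.
      apply Rmult_le_compat_l. lra. apply Rle_trans with (1 * 1). apply Rmult_le_compat; try lra.
      left; apply Rinv_0_lt_compat; lra. rewrite <- Rinv_1. apply Rinv_le_contravar; lra. lra.
    + apply Rle_ge. apply Rdiv_le_0_compat. apply Rmult_le_pos; lra. lra.
  - apply HI_base_shift. lra. apply HI_exp; auto.
Qed.

Lemma HI_wg1 : HI 1 wg (PI / 2 - RInt wg 0 1).
Proof.
  apply HI_base_shift. lra. apply HI_ext with (fun v => / (1 + v ^ 2)). auto. apply HI_atan.
Qed.

Lemma H_identity a : 0 < a < 1 ->
  Hf a + ln a + gam = (RInt (hI a) 0 1 - RInt wh 0 1) - (T2f a - ln 2 / 2) + RInt qf 0 a.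
Proof.
  intros Ha.
  assert (S1 : HI 1 (hI a) (Hf a - RInt (hI a) 0 1)) by (apply HI_base_shift; [lra| apply HI_H; lra]).
  assert (S2 : HI 1 (hI a) (RInt eI a 1 + Ef - T2f a)).
  { apply HI_ext with (fun v => e1 a v - t2 a v).
    intros x Hx. unfold e1, t2, hI, wh, wg. assert (Hp := one_plus_sq_pos x). field. repeat split; lra.
    apply HI_minus. apply HI_E1; auto. apply HI_T2; lra. }
  assert (S3 := HI_unique _ _ _ _ S1 S2).
  assert (Exq : forall u v, ex_RInt qf u v) by (intros; apply ex_RInt_cont_all, qf_cont).
  assert (S4 : RInt eI a 1 = - ln a - RInt qf a 1).
  { assert (Einv : RInt (fun t => / t) a 1 = - ln a).
    { apply is_RInt_unique. replace (- ln a) with (minus (ln 1) (ln a)) by (unfold minus, plus, opp; simpl; rewrite ln_1; ring).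
      apply (is_RInt_derive ln (fun t => / t)).
      - intros x Hx. rewrite Rmin_left in Hx by lra. apply is_derive_ln. lra.
      - intros x Hx. rewrite Rmin_left in Hx by lra.
        apply (ex_derive_continuous (K:=R_AbsRing) (V:=R_NormedModule) (fun t => / t)). auto_derive. lra. }
    rewrite <- Einv. rewrite <- (RInt_minus (fun t => / t) qf).
    apply RInt_ext. intros x Hx. rewrite Rmin_left, Rmax_right in Hx by lra.
    unfold eI, qf, minus, plus, opp; simpl. destruct (Req_EM_T x 0); [lra|]. field. lra.
    apply (ex_RInt_continuous (V:=R_CompleteNormedModule)). intros z Hz. rewrite Rmin_left, Rmax_right in Hz by lra.
    apply (ex_derive_continuous (K:=R_AbsRing) (V:=R_NormedModule) (fun t => / t)). auto_derive. lra.
    auto. }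
  assert (S6 : Iq = RInt qf 0 a + RInt qf a 1).
  { unfold Iq. rewrite <- (RInt_Chasles qf 0 a 1) by auto. reflexivity. }
  rewrite c1_val. unfold gam. rewrite S6.
  assert (Hf a = RInt (hI a) 0 1 + (- ln a - RInt qf a 1) + Ef - T2f a) by (rewrite <- S4; lra).
  lra.
Qed.

Lemma H_small : small (fun a => Hf a + ln a + gam).
Proof.
  set (c3 := PI / 2 - RInt wg 0 1).
  apply small_le with (fun a => (2 + Rabs c3) * a).
  - intros a Ha. rewrite H_identity by auto.
    assert (B1 : Rabs (RInt (hI a) 0 1 - RInt wh 0 1) <= 1 * a).
    { rewrite <- (RInt_minus (hI a) wh).
      replace (1 * a) with ((1 - 0) * a) by ring.
      apply (norm_RInt_le_const (V:=R_NormedModule) (fun t => minus (hI a t) (wh t)) 0 1 _ a). lra.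
      intros t Ht. unfold norm; simpl; unfold abs; simpl. unfold minus, plus, opp, hI; simpl.
      assert (Hw := wh_bound t ltac:(lra)). assert (H1 := exp_ineq1_le (- a * t)).
      assert (exp (- a * t) <= 1) by (rewrite <- exp_0; apply exp_mono; nra).
      replace (wh t * exp (- a * t) + - wh t) with (wh t * (exp (- a * t) - 1)) by ring.
      rewrite Rabs_mult. rewrite Rabs_right by lra. rewrite Rabs_left1 by lra.
      apply Rle_trans with (1 * (a * t)). apply Rmult_le_compat; lra. nra.
      apply (RInt_correct (V:=R_CompleteNormedModule)). apply (ex_RInt_minus (hI a) wh).
      apply ex_RInt_cont_all. intros; apply cont_w_exp, wh_der.
      apply ex_RInt_cont_all. intros; apply (ex_derive_continuous (K:=R_AbsRing) (V:=R_NormedModule) wh), wh_der.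
      apply ex_RInt_cont_all. intros; apply cont_w_exp, wh_der.
      apply ex_RInt_cont_all. intros; apply (ex_derive_continuous (K:=R_AbsRing) (V:=R_NormedModule) wh), wh_der. }
    assert (B2 : Rabs (T2f a - ln 2 / 2) <= a * c3).
    { apply (HI_diff_bound 1 (t2 a) (fun v => wg v / v) (fun v => a * wg v)).
      apply HI_T2; lra. apply HI_c2. apply HI_scal. apply HI_wg1.
      intros v Hv. unfold t2. assert (Hw := wg_bound v). assert (H1 := exp_ineq1_le (- a * v)).
      assert (exp (- a * v) <= 1) by (rewrite <- exp_0; apply exp_mono; nra).
      replace (exp (- a * v) * wg v / v - wg v / v) with (- (wg v * ((1 - exp (- a * v)) / v))) by (field; lra).
      rewrite Rabs_Ropp, Rabs_mult, (Rabs_right (wg v)) by lra.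
      rewrite Rabs_right. 2: apply Rle_ge, Rdiv_le_0_compat; lra.
      rewrite (Rmult_comm a). apply Rmult_le_compat_l. lra.
      apply Rmult_le_reg_r with v. lra. unfold Rdiv. rewrite Rmult_assoc, Rinv_l by lra. lra. }
    assert (B3 : Rabs (RInt qf 0 a) <= a * 1).
    { apply RInt_abs_bound. lra. apply qf_cont. intros t Ht.
      destruct (Req_dec t 0) as [E|E].
      - rewrite E. unfold qf. destruct (Req_EM_T 0 0); [|congruence]. rewrite Rabs_R1; lra.
      - assert (Hq := qf_bound t ltac:(lra)). rewrite Rabs_right; lra. }
    assert (0 <= Rabs c3) by apply Rabs_pos. assert (c3 <= Rabs c3) by apply RRle_abs.
    apply Rabs_le_between in B1. apply Rabs_le_between in B2. apply Rabs_le_between in B3.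
    apply Rabs_le. split; nra.
  - apply small_scal, small_id.
Qed.

Lemma GP_eq a : 0 < a -> Gf a = Pf a /\ Hf a = Qf a.
Proof.
  intros Ha.
  destruct (ode_zero (fun t => Gf t - Pf t) (fun t => Hf t - Qf t)) with a as [H1 H2]; auto.
  - intros t Ht. replace (- (Hf t - Qf t)) with (- Hf t - - Qf t) by ring.
    apply (is_derive_minus Gf Pf). apply G_derive; auto. apply Pf_derive; auto.
  - intros t Ht. replace (Gf t - Pf t) with ((Gf t - / t) - (Pf t - / t)) by ring.
    apply (is_derive_minus Hf Qf). apply H_derive; auto. apply Qf_derive; auto.
  - intros eps Heps.
    destruct (small_plus _ _ G_small (small_scal (-1) _ P_small) eps Heps) as [d1 [Hd1 B1]].
    assert (Hs : small (fun a => (Hf a + ln a + gam) + (-1) * (Qf a + ln a + euler_gamma))).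
    { apply small_plus. apply H_small. apply small_scal. apply Q_small. }
    destruct (Hs eps Heps) as [d2 [Hd2 B2]].
    exists (Rmin d1 d2). split. apply Rmin_pos; auto.
    intros t Ht. assert (Rmin d1 d2 <= d1) by apply Rmin_l. assert (Rmin d1 d2 <= d2) by apply Rmin_r.
    specialize (B1 t ltac:(lra)). specialize (B2 t ltac:(lra)). rewrite euler_gamma_eq in B2.
    split.
    + replace (Gf t - Pf t) with (Gf t - PI / 2 + -1 * (Pf t - PI / 2)) by ring. auto.
    + replace (Hf t - Qf t) with (Hf t + ln t + gam + -1 * (Qf t + ln t + gam)) by ring. auto.
  - split; lra.
Qed.

Lemma ball_R (x d y : R) : ball x d y <-> Rabs (y - x) < d.
Proof. unfold ball; simpl; unfold AbsRing_ball, abs, minus, plus, opp; simpl. tauto. Qed.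

Lemma deriv_to_lim (f : R -> R) (x l : R) : is_derive f x l -> is_lim (fun h => (f (x + h) - f x) / h) 0 l.
Proof.
  intros H. apply is_derive_Reals in H. apply is_lim_spec. intros eps.
  destruct (H eps (cond_pos eps)) as [d Hd].
  exists d. intros y Hy Hy0. apply (proj1 (ball_R _ _ _)) in Hy. rewrite Rminus_0_r in Hy. apply Hd; auto.
Qed.

Lemma lim_to_deriv (f : R -> R) (x l : R) : is_lim (fun h => (f (x + h) - f x) / h) 0 l -> is_derive f x l.
Proof.
  intros H. apply is_derive_Reals. intros eps Heps. apply is_lim_spec in H.
  destruct (H (mkposreal _ Heps)) as [d Hd]. exists d. intros h Hh0 Hh.
  apply (Hd h); auto. apply (proj2 (ball_R _ _ _)). rewrite Rminus_0_r. auto.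
Qed.

Lemma quot_deriv (A B : R -> R) (M1 k : R) : 0 < A 0 -> B 0 = 0 -> is_derive B 0 M1 ->
  (forall y, Rabs (A y - A 0) <= k * Rabs y) -> is_derive (fun y => B y / A y) 0 (M1 / A 0).
Proof.
  intros HA HB HD HC. apply lim_to_deriv.
  assert (L1 := deriv_to_lim _ _ _ HD).
  assert (L2 : is_lim A 0 (A 0)).
  { apply is_lim_spec. intros eps.
    assert (Hk : 0 < Rabs k + 1) by (assert (0 <= Rabs k) by apply Rabs_pos; lra).
    exists (mkposreal (eps / (Rabs k + 1)) ltac:(apply Rdiv_lt_0_compat; [apply cond_pos | lra])).
    intros y Hy _. apply (proj1 (ball_R _ _ _)) in Hy. simpl in Hy. rewrite Rminus_0_r in Hy.
    eapply Rle_lt_trans. apply HC. assert (k <= Rabs k) by apply RRle_abs.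
    assert (0 <= Rabs y) by apply Rabs_pos.
    apply Rle_lt_trans with ((Rabs k + 1) * Rabs y). nra.
    apply Rmult_lt_reg_r with (/ (Rabs k + 1)). apply Rinv_0_lt_compat; lra.
    replace ((Rabs k + 1) * Rabs y * / (Rabs k + 1)) with (Rabs y) by (field; lra). exact Hy. }
  assert (L3 := is_lim_div _ _ 0 M1 (A 0) L1 L2 ltac:(intros E; injection E; lra)).
  simpl in L3.
  apply is_lim_ext_loc with (fun h => (B (0 + h) - B 0) / h / A h).
  - assert (Hloc : locally 0 (fun y => 0 < A y)).
    { exists (mkposreal (A 0 / (2 * (Rabs k + 1))) ltac:(assert (0 <= Rabs k) by apply Rabs_pos; apply Rdiv_lt_0_compat; lra)).
      intros y Hy. apply (proj1 (ball_R _ _ _)) in Hy. simpl in Hy. rewrite Rminus_0_r in Hy.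
      specialize (HC y). apply Rabs_le_between in HC.
      assert (k <= Rabs k) by apply RRle_abs. assert (0 <= Rabs k) by apply Rabs_pos.
      assert (0 <= Rabs y) by apply Rabs_pos.
      assert (Hky : k * Rabs y <= A 0 / 2).
      { apply Rle_trans with ((Rabs k + 1) * Rabs y). nra.
        apply Rle_trans with ((Rabs k + 1) * (A 0 / (2 * (Rabs k + 1)))). apply Rmult_le_compat_l; lra.
        right; field; lra. }
      lra. }
    destruct Hloc as [d Hd]. exists d. intros y Hy Hy0. specialize (Hd y Hy).
    rewrite HB. rewrite Rplus_0_l. field. split; lra.
  - exact (L3 I).
Qed.

Definition phi (s0 u : R) : R := / (2 * s0) * exp (- Rabs u / s0).
Definition lam (se t : R) : R := se / (PI * (se ^ 2 + t ^ 2)).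
Definition dlam (se t : R) : R := - (2 * t * se) / (PI * (se ^ 2 + t ^ 2) ^ 2).
Definition d2lam (se t : R) : R := se * (6 * t ^ 2 - 2 * se ^ 2) / (PI * (se ^ 2 + t ^ 2) ^ 3).

Lemma sq_pos se t : 0 < se -> 0 < se ^ 2 + t ^ 2.
Proof. intros H. assert (0 <= t ^ 2) by apply pow2_ge_0. assert (0 < se ^ 2) by (apply pow_lt; auto). lra. Qed.

Lemma PI_pos' : 0 < PI.
Proof. apply PI_RGT_0. Qed.

Lemma lam_der (se t : R) : 0 < se -> is_derive (lam se) t (dlam se t).
Proof.
  intros H. unfold lam, dlam. assert (Hs := sq_pos se t H). assert (Hp := PI_pos').
  auto_derive. apply Rgt_not_eq. apply Rmult_lt_0_compat; nra.
  field. split; nra.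
Qed.

Lemma dlam_der (se t : R) : 0 < se -> is_derive (dlam se) t (d2lam se t).
Proof.
  intros H. unfold dlam, d2lam. assert (Hs := sq_pos se t H). assert (Hp := PI_pos').
  auto_derive. apply Rgt_not_eq. apply Rmult_lt_0_compat. lra. nra.
  field. split; nra.
Qed.

Lemma lam_cont (se t : R) : 0 < se -> continuous (lam se) t.
Proof.
  intros H. apply (ex_derive_continuous (K:=R_AbsRing) (V:=R_NormedModule) (lam se)).
  eexists; apply lam_der; auto.
Qed.

Lemma abs_div_le (N D B : R) : 0 < D -> Rabs N <= B * D -> Rabs (N / D) <= B.
Proof.
  intros HD H. unfold Rdiv. rewrite Rabs_mult, Rabs_Rinv by lra. rewrite (Rabs_right D) by lra.
  apply Rmult_le_reg_r with D; auto. rewrite Rmult_assoc, Rinv_l by lra. lra.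
Qed.

Lemma lam_bound (se t : R) : 0 < se -> 0 < lam se t <= / (PI * se).
Proof.
  intros H. unfold lam. assert (Hs := sq_pos se t H). assert (Hp := PI_pos').
  assert (0 <= t ^ 2) by apply pow2_ge_0.
  split. apply Rdiv_lt_0_compat; auto. apply Rmult_lt_0_compat; lra.
  apply Rmult_le_reg_r with (PI * (se ^ 2 + t ^ 2)). apply Rmult_lt_0_compat; lra.
  unfold Rdiv. rewrite Rmult_assoc, Rinv_l by (apply Rgt_not_eq, Rmult_lt_0_compat; lra). rewrite Rmult_1_r.
  replace (/ (PI * se) * (PI * (se ^ 2 + t ^ 2))) with ((se ^ 2 + t ^ 2) / se) by (field; lra).
  apply Rmult_le_reg_r with se; auto. unfold Rdiv. rewrite Rmult_assoc, Rinv_l by lra. nra.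
Qed.

Lemma dlam_bound (se t : R) : 0 < se -> Rabs (dlam se t) <= / (PI * se ^ 2).
Proof.
  intros H. unfold dlam. assert (Hs := sq_pos se t H). assert (Hp := PI_pos').
  apply abs_div_le. apply Rmult_lt_0_compat. lra. apply pow_lt; lra.
  replace (/ (PI * se ^ 2) * (PI * (se ^ 2 + t ^ 2) ^ 2)) with ((se ^ 2 + t ^ 2) ^ 2 / se ^ 2) by (field; lra).
  assert (Hse2 : 0 < se ^ 2) by (apply pow_lt; auto).
  apply Rmult_le_reg_r with (se ^ 2); auto.
  replace ((se ^ 2 + t ^ 2) ^ 2 / se ^ 2 * se ^ 2) with ((se ^ 2 + t ^ 2) ^ 2) by (field; lra).
  rewrite Rabs_Ropp. rewrite !Rabs_mult. rewrite (Rabs_right se) by lra. rewrite (Rabs_right 2) by lra.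
  assert (H1 : 2 * Rabs t * se <= se ^ 2 + t ^ 2).
  { assert (Ht2 : t ^ 2 = Rabs t ^ 2) by (simpl; rewrite !Rmult_1_r; rewrite <- Rabs_mult; rewrite Rabs_right; auto; apply Rle_ge, Rle_0_sqr).
    rewrite Ht2. assert (0 <= (Rabs t - se) ^ 2) by apply pow2_ge_0. nra. }
  assert (H2 : se ^ 2 <= se ^ 2 + t ^ 2) by (assert (0 <= t ^ 2) by apply pow2_ge_0; lra).
  assert (0 <= Rabs t) by apply Rabs_pos.
  replace ((se ^ 2 + t ^ 2) ^ 2) with ((se ^ 2 + t ^ 2) * (se ^ 2 + t ^ 2)) by ring.
  apply Rle_trans with ((se ^ 2 + t ^ 2) * se ^ 2). 
  replace (2 * Rabs t * se * se ^ 2) with ((2 * Rabs t * se) * se ^ 2) by ring.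
  apply Rmult_le_compat_r; lra.
  apply Rmult_le_compat_l; lra.
Qed.

Lemma d2lam_bound (se t : R) : 0 < se -> Rabs (d2lam se t) <= 6 / (PI * se ^ 3).
Proof.
  intros H. unfold d2lam. assert (Hs := sq_pos se t H). assert (Hp := PI_pos').
  apply abs_div_le. apply Rmult_lt_0_compat. lra. apply pow_lt; lra.
  assert (Hse2 : 0 < se ^ 2) by (apply pow_lt; auto).
  assert (Hse3 : 0 < se ^ 3) by (apply pow_lt; auto).
  replace (6 / (PI * se ^ 3) * (PI * (se ^ 2 + t ^ 2) ^ 3)) with (6 * (se ^ 2 + t ^ 2) ^ 3 / se ^ 3) by (field; lra).
  apply Rmult_le_reg_r with (se ^ 3); auto.
  replace (6 * (se ^ 2 + t ^ 2) ^ 3 / se ^ 3 * se ^ 3) with (6 * (se ^ 2 + t ^ 2) ^ 3) by (field; lra).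
  rewrite Rabs_mult. rewrite (Rabs_right se) by lra.
  assert (H1 : Rabs (6 * t ^ 2 - 2 * se ^ 2) <= 6 * (se ^ 2 + t ^ 2)).
  { assert (0 <= t ^ 2) by apply pow2_ge_0. apply Rabs_le. split; lra. }
  assert (0 <= t ^ 2) by apply pow2_ge_0.
  remember (se ^ 2 + t ^ 2) as S eqn:HS.
  assert (H2 : se ^ 2 <= S) by lra.
  assert (E3 : se ^ 3 = se * se ^ 2) by ring.
  apply Rle_trans with (se * (6 * S) * se ^ 3).
  apply Rmult_le_compat_r. lra. apply Rmult_le_compat_l; lra.
  replace (se * (6 * S) * se ^ 3) with (6 * S * (se ^ 2 * se ^ 2)) by ring.
  replace (6 * S ^ 3) with (6 * S * (S * S)) by ring.
  assert (0 < S) by lra.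
  apply Rmult_le_compat_l. lra. apply Rmult_le_compat; lra.
Qed.

Lemma phi_cont (s0 x : R) : 0 < s0 -> continuous (phi s0) x.
Proof.
  intros H. unfold phi. apply (continuous_comp Rabs (fun r => / (2 * s0) * exp (- r / s0))).
  apply continuous_Rabs.
  apply (ex_derive_continuous (K:=R_AbsRing) (V:=R_NormedModule) (fun r => / (2 * s0) * exp (- r / s0))).
  auto_derive. lra.
Qed.

Lemma phi_pos (s0 u : R) : 0 < s0 -> 0 < phi s0 u.
Proof.
  intros H. unfold phi. apply Rmult_lt_0_compat. apply Rinv_0_lt_compat; lra. apply exp_pos.
Qed.

Lemma phi_exp (s0 u : R) : 0 < s0 -> 0 <= u -> phi s0 u = / (2 * s0) * exp (- (/ s0) * u).
Proof.
  intros H Hu. unfold phi. rewrite Rabs_right by lra. f_equal. f_equal. field. lra.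
Qed.

Lemma HI_phi s0 : 0 < s0 -> HI 0 (phi s0) (/ 2).
Proof.
  intros H. apply HI_ext with (fun u => / (2 * s0) * exp (- (/ s0) * u)).
  intros; symmetry; apply phi_exp; auto.
  replace (/ 2) with (/ (2 * s0) * / / s0) by (field; lra).
  apply HI_scal. apply HI_exp. apply Rinv_0_lt_compat; auto.
Qed.

Lemma HI_uphi s0 : 0 < s0 -> HI 0 (fun u => u * phi s0 u) (s0 / 2).
Proof.
  intros H. apply HI_ext with (fun u => / (2 * s0) * (u * exp (- (/ s0) * u))).
  intros; rewrite phi_exp; auto; ring.
  replace (s0 / 2) with (/ (2 * s0) * / (/ s0) ^ 2) by (field; lra).
  apply HI_scal. apply HI_xexp. apply Rinv_0_lt_compat; auto.
Qed.

Definition fDp (s0 se y u : R) : R := phi s0 u * lam se (y - u).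
Definition fDm (s0 se y u : R) : R := phi s0 u * lam se (y + u).
Definition fNp (s0 se th0 y u : R) : R := (th0 + u) * phi s0 u * lam se (y - u).
Definition fNm (s0 se th0 y u : R) : R := (th0 - u) * phi s0 u * lam se (y + u).

Definition LimV (f : R -> R) : R := real (Lim (fun b => RInt f 0 b) p_infty).

Lemma lam_m_cont (se y x : R) : 0 < se -> continuous (fun u => lam se (y - u)) x.
Proof.
  intros H. apply (continuous_comp (fun u => y - u) (lam se)).
  apply (continuous_minus (fun _ => y) (fun u => u)). apply continuous_const. apply continuous_id.
  apply lam_cont; auto.
Qed.

Lemma lam_p_cont (se y x : R) : 0 < se -> continuous (fun u => lam se (y + u)) x.
Proof.
  intros H. apply (continuous_comp (fun u => y + u) (lam se)).
  apply (continuous_plus (fun _ => y) (fun u => u)). apply continuous_const. apply continuous_id.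
  apply lam_cont; auto.
Qed.

Lemma HI_major (s0 se : R) (g : R -> R) (c1 c2 : R) : 0 < s0 ->
  (forall x, continuous g x) ->
  (forall u, 0 <= u -> Rabs (g u) <= c1 * phi s0 u + c2 * (u * phi s0 u)) -> HI 0 g (LimV g).
Proof.
  intros Hs Hc Hb. apply HI_exLim.
  apply HI_comp with (fun u => c1 * phi s0 u + c2 * (u * phi s0 u)) (c1 * / 2 + c2 * (s0 / 2)).
  intros; apply Hc. auto.
  apply HI_plus; apply HI_scal. apply HI_phi; auto. apply HI_uphi; auto.
Qed.

Section Post.
Variables (s0 se th0 : R).
Hypotheses (Hs0 : 0 < s0) (Hse : 0 < se).

Lemma phi_ge u : 0 <= phi s0 u.
Proof. left; apply phi_pos; auto. Qed.

Lemma lam_b t : 0 < lam se t <= / (PI * se).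
Proof. apply lam_bound; auto. Qed.

Lemma HI_Dp y : HI 0 (fDp s0 se y) (LimV (fDp s0 se y)).
Proof.
  apply (HI_major s0 se _ (/ (PI * se)) 0); auto.
  - intros x. apply (continuous_mult (phi s0) (fun u => lam se (y - u))). apply phi_cont; auto. apply lam_m_cont; auto.
  - intros u Hu. unfold fDp. rewrite Rabs_mult, (Rabs_right (phi s0 u)), (Rabs_right (lam se _)).
    assert (H1 := lam_b (y - u)). assert (H2 := phi_ge u). nra.
    apply Rle_ge; left; apply lam_b. apply Rle_ge, phi_ge.
Qed.

Lemma HI_Dm y : HI 0 (fDm s0 se y) (LimV (fDm s0 se y)).
Proof.
  apply (HI_major s0 se _ (/ (PI * se)) 0); auto.
  - intros x. apply (continuous_mult (phi s0) (fun u => lam se (y + u))). apply phi_cont; auto. apply lam_p_cont; auto.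
  - intros u Hu. unfold fDm. rewrite Rabs_mult, (Rabs_right (phi s0 u)), (Rabs_right (lam se _)).
    assert (H1 := lam_b (y + u)). assert (H2 := phi_ge u). nra.
    apply Rle_ge; left; apply lam_b. apply Rle_ge, phi_ge.
Qed.

Lemma HI_Np y : HI 0 (fNp s0 se th0 y) (LimV (fNp s0 se th0 y)).
Proof.
  apply (HI_major s0 se _ (Rabs th0 * / (PI * se)) (/ (PI * se))); auto.
  - intros x. apply (continuous_mult (fun u => (th0 + u) * phi s0 u) (fun u => lam se (y - u))).
    apply (continuous_mult (fun u => th0 + u) (phi s0)).
    apply (continuous_plus (fun _ => th0) (fun u => u)). apply continuous_const. apply continuous_id.
    apply phi_cont; auto. apply lam_m_cont; auto.
  - intros u Hu. unfold fNp. rewrite !Rabs_mult, (Rabs_right (phi s0 u)), (Rabs_right (lam se _)).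
    assert (H1 := lam_b (y - u)). assert (H2 := phi_ge u).
    assert (H3 : Rabs (th0 + u) <= Rabs th0 + u) by (eapply Rle_trans; [apply Rabs_triang| rewrite (Rabs_right u) by lra; lra]).
    assert (0 <= Rabs (th0 + u)) by apply Rabs_pos. assert (0 <= Rabs th0) by apply Rabs_pos.
    apply Rle_trans with ((Rabs th0 + u) * phi s0 u * / (PI * se)).
    apply Rmult_le_compat. apply Rmult_le_pos; lra. lra. apply Rmult_le_compat_r; lra. lra.
    right; ring.
    apply Rle_ge; left; apply lam_b. apply Rle_ge, phi_ge.
Qed.

Lemma HI_Nm y : HI 0 (fNm s0 se th0 y) (LimV (fNm s0 se th0 y)).
Proof.
  apply (HI_major s0 se _ (Rabs th0 * / (PI * se)) (/ (PI * se))); auto.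
  - intros x. apply (continuous_mult (fun u => (th0 - u) * phi s0 u) (fun u => lam se (y + u))).
    apply (continuous_mult (fun u => th0 - u) (phi s0)).
    apply (continuous_minus (fun _ => th0) (fun u => u)). apply continuous_const. apply continuous_id.
    apply phi_cont; auto. apply lam_p_cont; auto.
  - intros u Hu. unfold fNm. rewrite !Rabs_mult, (Rabs_right (phi s0 u)), (Rabs_right (lam se _)).
    assert (H1 := lam_b (y + u)). assert (H2 := phi_ge u).
    assert (H3 : Rabs (th0 - u) <= Rabs th0 + u).
    { unfold Rminus. eapply Rle_trans. apply Rabs_triang. rewrite Rabs_Ropp, (Rabs_right u) by lra. lra. }
    assert (0 <= Rabs (th0 - u)) by apply Rabs_pos. assert (0 <= Rabs th0) by apply Rabs_pos.
    apply Rle_trans with ((Rabs th0 + u) * phi s0 u * / (PI * se)).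
    apply Rmult_le_compat. apply Rmult_le_pos; lra. lra. apply Rmult_le_compat_r; lra. lra.
    right; ring.
    apply Rle_ge; left; apply lam_b. apply Rle_ge, phi_ge.
Qed.

End Post.

Lemma HI_zero c : HI c (fun _ => 0) 0.
Proof.
  split. intros; apply ex_RInt_const.
  apply is_lim_ext with (fun _ => 0). intros; rewrite RInt_const; unfold scal; simpl; unfold mult; simpl; ring.
  apply is_lim_const.
Qed.

Lemma lam_m_der (se u z : R) : 0 < se -> is_derive (fun z => lam se (z - u)) z (dlam se (z - u)).
Proof.
  intros H. unfold lam, dlam. assert (Hs := sq_pos se (z - u) H). assert (Hp := PI_pos').
  auto_derive. apply Rgt_not_eq. apply Rmult_lt_0_compat; nra. field. split; nra.
Qed.
Lemma lam_p_der (se u z : R) : 0 < se -> is_derive (fun z => lam se (z + u)) z (dlam se (z + u)).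
Proof.
  intros H. unfold lam, dlam. assert (Hs := sq_pos se (z + u) H). assert (Hp := PI_pos').
  auto_derive. apply Rgt_not_eq. apply Rmult_lt_0_compat; nra. field. split; nra.
Qed.
Lemma dlam_m_der (se u z : R) : 0 < se -> is_derive (fun z => dlam se (z - u)) z (d2lam se (z - u)).
Proof.
  intros H. unfold dlam, d2lam. assert (Hs := sq_pos se (z - u) H). assert (Hp := PI_pos').
  auto_derive. apply Rgt_not_eq. apply Rmult_lt_0_compat. lra. nra. field. split; nra.
Qed.
Lemma dlam_p_der (se u z : R) : 0 < se -> is_derive (fun z => dlam se (z + u)) z (d2lam se (z + u)).
Proof.
  intros H. unfold dlam, d2lam. assert (Hs := sq_pos se (z + u) H). assert (Hp := PI_pos').
  auto_derive. apply Rgt_not_eq. apply Rmult_lt_0_compat. lra. nra. field. split; nra.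
Qed.

Lemma dlam_diff_cont (se x : R) : 0 < se -> continuous (fun u => dlam se (0 - u) - dlam se (0 + u)) x.
Proof.
  intros Hse.
  apply (continuous_minus (fun u => dlam se (0 - u)) (fun u => dlam se (0 + u))).
  - apply (ex_derive_continuous (K:=R_AbsRing) (V:=R_NormedModule) (fun u => dlam se (0 - u))).
    apply (ex_derive_comp (dlam se) (fun u => 0 - u)). eexists; apply dlam_der; auto. auto_derive; auto.
  - apply (ex_derive_continuous (K:=R_AbsRing) (V:=R_NormedModule) (fun u => dlam se (0 + u))).
    apply (ex_derive_comp (dlam se) (fun u => 0 + u)). eexists; apply dlam_der; auto. auto_derive; auto.
Qed.

Section Post2.
Variables (s0 se th0 : R).
Hypotheses (Hs0 : 0 < s0) (Hse : 0 < se).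

Definition Aint (y u : R) : R := phi s0 u * (lam se (y - u) + lam se (y + u)).
Definition Bint (y u : R) : R := u * phi s0 u * (lam se (y - u) - lam se (y + u)).
Definition Aval (y : R) : R := LimV (fDp s0 se y) + LimV (fDm s0 se y).
Definition Bval (y : R) : R := LimV (fNp s0 se th0 y) + LimV (fNm s0 se th0 y) - th0 * Aval y.
Definition dB (u : R) : R := u * phi s0 u * (dlam se (0 - u) - dlam se (0 + u)).
Definition C1 : R := / (PI * se ^ 2).
Definition C2 : R := 6 / (PI * se ^ 3).

Lemma HI_A y : HI 0 (Aint y) (Aval y).
Proof.
  apply HI_ext with (fun u => fDp s0 se y u + fDm s0 se y u).
  intros; unfold fDp, fDm, Aint; ring.
  apply HI_plus. apply HI_Dp; auto. apply HI_Dm; auto.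
Qed.

Lemma HI_B y : HI 0 (Bint y) (Bval y).
Proof.
  apply HI_ext with (fun u => (fNp s0 se th0 y u + fNm s0 se th0 y u) - th0 * Aint y u).
  intros; unfold fNp, fNm, Aint, Bint; ring.
  apply HI_minus. apply HI_plus. apply HI_Np; auto. apply HI_Nm; auto. apply HI_scal. apply HI_A.
Qed.

Lemma B0 : Bval 0 = 0.
Proof.
  apply (HI_unique 0 (Bint 0)). apply HI_B.
  apply HI_ext with (fun _ => 0). intros u _. unfold Bint.
  replace (lam se (0 - u)) with (lam se (0 + u)). ring.
  unfold lam. f_equal. f_equal. f_equal. ring.
  apply HI_zero.
Qed.

Lemma A_pos y : 0 < Aval y.
Proof.
  apply (HI_pos 0 1 (Aint y)). lra.
  - intros x _. unfold Aint. assert (H1 := lam_bound se (y - x) Hse). assert (H2 := lam_bound se (y + x) Hse).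
    assert (H3 := phi_pos s0 x Hs0). apply Rmult_le_pos; lra.
  - intros x _. unfold Aint. assert (H1 := lam_bound se (y - x) Hse). assert (H2 := lam_bound se (y + x) Hse).
    assert (H3 := phi_pos s0 x Hs0). apply Rmult_lt_0_compat; lra.
  - intros x _. unfold Aint. apply (continuous_mult (phi s0) (fun u => lam se (y - u) + lam se (y + u))).
    apply phi_cont; auto. apply (continuous_plus (fun u => lam se (y - u)) (fun u => lam se (y + u))).
    apply lam_m_cont; auto. apply lam_p_cont; auto.
  - apply HI_A.
Qed.

Lemma lam_lip_m (y u : R) : Rabs (lam se (y - u) - lam se (0 - u)) <= C1 * Rabs (y - 0).
Proof.
  apply (taylor1 (fun z => lam se (z - u)) (fun z => dlam se (z - u)) 0 y C1).
  intros; apply lam_m_der; auto. intros; apply dlam_bound; auto.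
Qed.
Lemma lam_lip_p (y u : R) : Rabs (lam se (y + u) - lam se (0 + u)) <= C1 * Rabs (y - 0).
Proof.
  apply (taylor1 (fun z => lam se (z + u)) (fun z => dlam se (z + u)) 0 y C1).
  intros; apply lam_p_der; auto. intros; apply dlam_bound; auto.
Qed.

Lemma A_lip y : Rabs (Aval y - Aval 0) <= (2 * C1 * / 2) * Rabs y.
Proof.
  replace ((2 * C1 * / 2) * Rabs y) with (Rabs y * (2 * C1) * / 2) by ring.
  apply (HI_diff_bound 0 (Aint y) (Aint 0) (fun u => Rabs y * (2 * C1) * phi s0 u)).
  apply HI_A. apply HI_A. apply HI_scal. apply HI_phi; auto.
  intros u Hu. unfold Aint.
  replace (phi s0 u * (lam se (y - u) + lam se (y + u)) - phi s0 u * (lam se (0 - u) + lam se (0 + u)))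
    with (phi s0 u * ((lam se (y - u) - lam se (0 - u)) + (lam se (y + u) - lam se (0 + u)))) by ring.
  rewrite Rabs_mult, (Rabs_right (phi s0 u)) by (apply Rle_ge; left; apply phi_pos; auto).
  assert (H1 := lam_lip_m y u). assert (H2 := lam_lip_p y u). rewrite Rminus_0_r in H1, H2.
  assert (H3 := Rabs_triang (lam se (y - u) - lam se (0 - u)) (lam se (y + u) - lam se (0 + u))).
  assert (H4 := phi_pos s0 u Hs0).
  replace (Rabs y * (2 * C1) * phi s0 u) with (phi s0 u * (C1 * Rabs y + C1 * Rabs y)) by ring.
  apply Rmult_le_compat_l; lra.
Qed.

Lemma HI_dB : HI 0 dB (LimV dB).
Proof.
  apply (HI_major s0 se _ 0 (2 * C1)); auto.
  - intros x. unfold dB. apply (continuous_mult (fun u => u * phi s0 u) (fun u => dlam se (0 - u) - dlam se (0 + u))).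
    apply (continuous_mult (fun u => u) (phi s0)). apply continuous_id. apply phi_cont; auto.
    apply dlam_diff_cont; auto.
  - intros u Hu. unfold dB. rewrite !Rabs_mult. rewrite (Rabs_right u), (Rabs_right (phi s0 u)) by (try apply Rle_ge; try lra; left; apply phi_pos; auto).
    assert (H1 := dlam_bound se (0 - u) Hse). assert (H2 := dlam_bound se (0 + u) Hse).
    assert (H3 : Rabs (dlam se (0 - u) - dlam se (0 + u)) <= 2 * C1).
    { unfold Rminus at 1. eapply Rle_trans. apply Rabs_triang. rewrite Rabs_Ropp. unfold C1. lra. }
    assert (H4 := phi_pos s0 u Hs0). assert (0 <= u * phi s0 u) by (apply Rmult_le_pos; lra).
    apply Rle_trans with (u * phi s0 u * (2 * C1)). apply Rmult_le_compat_l; auto. right; ring.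
Qed.

Lemma B_deriv : is_derive Bval 0 (LimV dB).
Proof.
  apply (HI_deriv_param 0 0 1 (LimV dB) (2 * C2 * (s0 / 2)) (fun x u => Bint x u) Bval dB
           (fun u => 2 * C2 * (u * phi s0 u))).
  - lra.
  - intros; apply HI_B.
  - apply HI_dB.
  - apply HI_scal. apply HI_uphi; auto.
  - intros x u _ Hu. unfold Bint, dB.
    assert (T1 := taylor2 (fun z => lam se (z - u)) (fun z => dlam se (z - u)) (fun z => d2lam se (z - u)) 0 x C2).
    assert (T2 := taylor2 (fun z => lam se (z + u)) (fun z => dlam se (z + u)) (fun z => d2lam se (z + u)) 0 x C2).
    cbv beta in T1, T2.
    assert (T1' : Rabs (lam se (x - u) - lam se (0 - u) - (x - 0) * dlam se (0 - u)) <= C2 * (x - 0) ^ 2).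
    { apply T1. intros; apply lam_m_der; auto. intros; apply dlam_m_der; auto. intros; apply d2lam_bound; auto. }
    assert (T2' : Rabs (lam se (x + u) - lam se (0 + u) - (x - 0) * dlam se (0 + u)) <= C2 * (x - 0) ^ 2).
    { apply T2. intros; apply lam_p_der; auto. intros; apply dlam_p_der; auto. intros; apply d2lam_bound; auto. }
    replace (u * phi s0 u * (lam se (x - u) - lam se (x + u)) - u * phi s0 u * (lam se (0 - u) - lam se (0 + u)) -
             (x - 0) * (u * phi s0 u * (dlam se (0 - u) - dlam se (0 + u))))
      with (u * phi s0 u * ((lam se (x - u) - lam se (0 - u) - (x - 0) * dlam se (0 - u)) -
                             (lam se (x + u) - lam se (0 + u) - (x - 0) * dlam se (0 + u)))) by ring.
    assert (H4 := phi_pos s0 u Hs0). assert (Hup : 0 <= u * phi s0 u) by (apply Rmult_le_pos; lra).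
    rewrite Rabs_mult, (Rabs_right (u * phi s0 u)) by lra.
    assert (H5 := Rabs_triang (lam se (x - u) - lam se (0 - u) - (x - 0) * dlam se (0 - u))
                   (- (lam se (x + u) - lam se (0 + u) - (x - 0) * dlam se (0 + u)))).
    rewrite Rabs_Ropp in H5.
    replace ((x - 0) ^ 2 * (2 * C2 * (u * phi s0 u))) with (u * phi s0 u * (C2 * (x - 0) ^ 2 + C2 * (x - 0) ^ 2)) by ring.
    apply Rmult_le_compat_l; auto. unfold Rminus at 1. lra.
Qed.

End Post2.

Lemma cauchy_lam (se t : R) : 0 < se -> cauchy_pdf 0 se t = lam se t.
Proof.
  intros H. unfold cauchy_pdf, lam. assert (Hs := sq_pos se t H). assert (Hp := PI_pos').
  replace (1 + ((t - 0) / se) ^ 2) with ((se ^ 2 + t ^ 2) / se ^ 2) by (field; lra).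
  field. repeat split; try lra. 
Qed.

Lemma pm_eq (s0 se th0 x : R) : 0 < s0 -> 0 < se ->
  posterior_mean (laplace_pdf th0 s0) (cauchy_pdf 0 se) x =
  th0 + Bval s0 se th0 (x - th0) / Aval s0 se (x - th0).
Proof.
  intros Hs0 Hse. unfold posterior_mean, int_R.
  assert (Cl : forall th, laplace_pdf th0 s0 th = phi s0 (th - th0)) by (intros; reflexivity).
  assert (Cc : forall t, cauchy_pdf 0 se t = lam se t) by (intros; apply cauchy_lam; auto).
  rewrite (int_R_value (fun th => th * laplace_pdf th0 s0 th * cauchy_pdf 0 se (x - th)) th0
             (LimV (fNp s0 se th0 (x - th0))) (LimV (fNm s0 se th0 (x - th0)))).
  rewrite (int_R_value (fun th => laplace_pdf th0 s0 th * cauchy_pdf 0 se (x - th)) th0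
             (LimV (fDp s0 se (x - th0))) (LimV (fDm s0 se (x - th0)))).
  - unfold Bval, Aval. assert (HA := A_pos s0 se Hs0 Hse (x - th0)). unfold Aval in HA.
    field. lra.
  - intros t. apply continuous_ext with (fun th => phi s0 (th - th0) * lam se (x - th)).
    intros; rewrite Cl, Cc; auto.
    apply (continuous_mult (fun th => phi s0 (th - th0)) (fun th => lam se (x - th))).
    apply (continuous_comp (fun th => th - th0) (phi s0)).
    apply (continuous_minus (fun th => th) (fun _ => th0)). apply continuous_id. apply continuous_const.
    apply phi_cont; auto. apply lam_m_cont; auto.
  - apply HI_ext with (fDp s0 se (x - th0)). intros u _. unfold fDp. rewrite Cl, Cc.
    replace (th0 + u - th0) with u by ring. replace (x - (th0 + u)) with (x - th0 - u) by ring. auto.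
    apply HI_Dp; auto.
  - apply HI_ext with (fDm s0 se (x - th0)). intros u _. unfold fDm. rewrite Cl, Cc.
    replace (th0 - u - th0) with (- u) by ring. replace (x - (th0 - u)) with (x - th0 + u) by ring.
    unfold phi. rewrite Rabs_Ropp. auto.
    apply HI_Dm; auto.
  - intros t. apply continuous_ext with (fun th => th * phi s0 (th - th0) * lam se (x - th)).
    intros; rewrite Cl, Cc; auto.
    apply (continuous_mult (fun th => th * phi s0 (th - th0)) (fun th => lam se (x - th))).
    apply (continuous_mult (fun th => th) (fun th => phi s0 (th - th0))). apply continuous_id.
    apply (continuous_comp (fun th => th - th0) (phi s0)).
    apply (continuous_minus (fun th => th) (fun _ => th0)). apply continuous_id. apply continuous_const.
    apply phi_cont; auto. apply lam_m_cont; auto.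
  - apply HI_ext with (fNp s0 se th0 (x - th0)). intros u _. unfold fNp. rewrite Cl, Cc.
    replace (th0 + u - th0) with u by ring. replace (x - (th0 + u)) with (x - th0 - u) by ring. auto.
    apply HI_Np; auto.
  - apply HI_ext with (fNm s0 se th0 (x - th0)). intros u _. unfold fNm. rewrite Cl, Cc.
    replace (th0 - u - th0) with (- u) by ring. replace (x - (th0 - u)) with (x - th0 + u) by ring.
    unfold phi. rewrite Rabs_Ropp. auto.
    apply HI_Nm; auto.
Qed.

Lemma A0_val (s0 se : R) : 0 < s0 -> 0 < se -> Aval s0 se 0 = / (PI * s0) * Gf (se / s0).
Proof.
  intros Hs0 Hse. assert (Hp := PI_pos').
  assert (H1 := HI_scale 0 se (Aint s0 se 0) (Aval s0 se 0) Hse (HI_A s0 se Hs0 Hse 0)).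
  replace (0 / se) with 0 in H1 by (field; lra).
  apply (HI_unique 0 (fun v => se * Aint s0 se 0 (se * v))); auto.
  apply HI_ext with (fun v => / (PI * s0) * gI (se / s0) v).
  2:{ apply HI_scal. apply HI_G. apply Rdiv_lt_0_compat; auto. }
  intros v Hv. unfold Aint, gI, wg, phi, lam.
  rewrite Rabs_right by (apply Rle_ge, Rmult_le_pos; lra).
  replace (- (se * v) / s0) with (- (se / s0) * v) by (field; lra).
  assert (Hv2 := one_plus_sq_pos v).
  replace (se ^ 2 + (0 - se * v) ^ 2) with (se ^ 2 * (1 + v ^ 2)) by ring.
  replace (se ^ 2 + (0 + se * v) ^ 2) with (se ^ 2 * (1 + v ^ 2)) by ring.
  field. repeat split; try lra.
Qed.

Lemma M1_val (s0 se : R) : 0 < s0 -> 0 < se ->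
  LimV (dB s0 se) = / (PI * s0) * (Gf (se / s0) - se / s0 * Hf (se / s0)).
Proof.
  intros Hs0 Hse. assert (Hp := PI_pos').
  assert (H1 := HI_scale 0 se (dB s0 se) _ Hse (HI_dB s0 se Hs0 Hse)).
  replace (0 / se) with 0 in H1 by (field; lra).
  apply (HI_unique 0 (fun v => se * dB s0 se (se * v))); auto.
  apply HI_ext with (fun v => / (PI * s0) * kI (se / s0) v).
  2:{ apply HI_scal. apply HI_K. apply Rdiv_lt_0_compat; auto. }
  intros v Hv. unfold dB, kI, wk, phi, dlam.
  rewrite Rabs_right by (apply Rle_ge, Rmult_le_pos; lra).
  replace (- (se * v) / s0) with (- (se / s0) * v) by (field; lra).
  assert (Hv2 := one_plus_sq_pos v).
  replace (se ^ 2 + (0 - se * v) ^ 2) with (se ^ 2 * (1 + v ^ 2)) by ring.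
  replace (se ^ 2 + (0 + se * v) ^ 2) with (se ^ 2 * (1 + v ^ 2)) by ring.
  field. repeat split; try lra.
Qed.

Theorem mainTheorem8 (sigma0 sigmaeps theta0 : R) :
  0 < sigma0 -> 0 < sigmaeps ->
  let a := sigmaeps / sigma0 in
  is_derive (posterior_mean (laplace_pdf theta0 sigma0) (cauchy_pdf 0 sigmaeps))
    theta0
    (1 - a * ((PI / 2 * sin a - cos a * CosInt a - sin a * SinInt a) /
              (PI / 2 * cos a - cos a * SinInt a + sin a * CosInt a))).
Proof.
  intros Hs0 Hse a.
  assert (Ha : 0 < a) by (unfold a; apply Rdiv_lt_0_compat; auto).
  assert (HR := quot_deriv (Aval sigma0 sigmaeps) (Bval sigma0 sigmaeps theta0) (LimV (dB sigma0 sigmaeps))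
                  (2 * C1 sigmaeps * / 2) (A_pos sigma0 sigmaeps Hs0 Hse 0) (B0 sigma0 sigmaeps theta0 Hs0 Hse)
                  (B_deriv sigma0 sigmaeps theta0 Hs0 Hse) (A_lip sigma0 sigmaeps Hs0 Hse)).
  assert (Hval : LimV (dB sigma0 sigmaeps) / Aval sigma0 sigmaeps 0 =
     1 - a * ((PI / 2 * sin a - cos a * CosInt a - sin a * SinInt a) /
              (PI / 2 * cos a - cos a * SinInt a + sin a * CosInt a))).
  { rewrite M1_val, A0_val by auto. fold a.
    destruct (GP_eq a Ha) as [E1 E2]. assert (HG := Gf_pos a Ha).
    rewrite E1 in HG. rewrite E1, E2. unfold Pf, Qf in *. assert (Hp := PI_pos').
    field. repeat split; lra. }
  rewrite <- Hval.
  apply is_derive_ext with (fun x => theta0 + (fun y => Bval sigma0 sigmaeps theta0 y / Aval sigma0 sigmaeps y) (x - theta0)).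
  { intros x. rewrite pm_eq by auto. reflexivity. }
  replace (LimV (dB sigma0 sigmaeps) / Aval sigma0 sigmaeps 0)
    with (0 + scal 1 (LimV (dB sigma0 sigmaeps) / Aval sigma0 sigmaeps 0))
    by (unfold scal; simpl; unfold mult; simpl; ring).
  apply (is_derive_plus (fun _ => theta0)). { auto_derive; auto. }
  apply (is_derive_comp (fun y => Bval sigma0 sigmaeps theta0 y / Aval sigma0 sigmaeps y) (fun x => x - theta0)).
  - replace (theta0 - theta0) with 0 by ring. exact HR.
  - auto_derive; auto.
Qed.
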